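(* Let $p\in[2,\infty]$ with conjugate exponent $p^*$ (so $1/p+1/p^*=1$, $p^*=1$ if $p=\infty$), and let $m\geq 2$ be an integer. Then for every continuous $m$-linear form $T:X_p\times c_0\times\cdots\times c_0\to\mathbb{C}$, $$\Big(\sum_{i_1=1}^\infty\Big(\sum_{i_2,\ldots,i_m=1}^\infty|T(e_{i_1},\ldots,e_{i_m})|^2\Big)^{p^*/2}\Big)^{1/p^*}\le (S_{m-1,p^*})^{-1}\|T\|;$$ that is, the optimal constant $C^{id,(p,\infty,\ldots,\infty)\mathbb{C}}_{(p^*,2,\ldots,2)}$ in this inequality satisfies $C^{id,(p,\infty,\ldots,\infty)\mathbb{C}}_{(p^*,2,\ldots,2)}\le(S_{m-1,p^*})^{-1}$.
   Context: $X_p=\ell_p(\mathbb{C})$ for $p<\infty$ and $X_\infty=c_0(\mathbb{C})$; $(e_k)$ are the canonical unit vectors; $\|T\|=\sup\{|T(x^{(1)},\ldots,x^{(m)})|:\|x^{(i)}\|\le1\}$. $S_{k,q}$ ($k\ge1$, $0<q<\infty$) denotes the largest constant $S$ such that for all $N$ and all complex arrays $(a_{i_1\ldots i_k})_{i_1,\ldots,i_k=1}^N$, $S(\sum|a_{i_1\ldots i_k}|^2)^{1/2}\le(\mathbb{E}|\sum a_{i_1\ldots i_k}\varepsilon^{(1)}_{i_1}\cdots\varepsilon^{(k)}_{i_k}|^q)^{1/q}$, where $\varepsilon^{(j)}_n$ are independent Steinhaus variables (uniformly distributed on the unit circle). *)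

(* Defs.v *)
From Stdlib Require Import Reals.
From Coquelicot Require Import Coquelicot.
Open Scope R_scope.

(* power with rpow 0 y = 0 (used only for y > 0) *)
Definition rpow (x y : R) : R :=
  match Rlt_dec 0 x with left _ => Rpower x y | right _ => 0 end.

Fixpoint fsum {A : Type} (plus : A -> A -> A) (z : A) (N : nat) (g : nat -> A) : A :=
  match N with O => z | S N' => plus (fsum plus z N' g) (g N') end.

(* sum over multi-indices i : nat -> nat with i j in [0,N) for j < k
   (i j = 0 for j >= k); i 0 is the first index *)
Fixpoint msum {A : Type} (plus : A -> A -> A) (z : A) (k N : nat)
  (f : (nat -> nat) -> A) : A :=
  match k with
  | O => f (fun _ => O)
  | S k' => fsum plus z N (fun n =>
      msum plus z k' N (fun i => f (fun j => match j with O => n | S j' => i j' end)))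
  end.

Definition cis (t : R) : C := (cos t, sin t).

(* Expectation over n independent Steinhaus variables, realized as
   normalized iterated integral over angles th 0, ..., th (n-1) in [0, 2 PI]. *)
Fixpoint steinE (n : nat) (f : (nat -> R) -> R) : R :=
  match n with
  | O => f (fun _ => 0)
  | S n' => / (2 * PI) * RInt (fun t =>
      steinE n' (fun th => f (fun l => if Nat.eqb l n' then t else th l))) 0 (2 * PI)
  end.

(* the variable eps^{(j)}_n (j < k, n < N) is cis (th (j*N + n)) *)
Definition steinSum (k N : nat) (a : (nat -> nat) -> C) (th : nat -> R) : C :=
  msum Cplus 0%C k N (fun i =>
    Cmult (a i) (fsum Cmult 1%C k (fun j => cis (th (j * N + i j)%nat)))).

(* S is an admissible constant in the multilinear Khinchin inequality *)
Definition khinchin_ok (k : nat) (q S : R) : Prop :=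
  forall (N : nat) (a : (nat -> nat) -> C),
    S * sqrt (msum Rplus 0 k N (fun i => (Cmod (a i)) ^ 2))
    <= rpow (steinE (k * N) (fun th => rpow (Cmod (steinSum k N a th)) q)) (/ q).

Definition S_const (k : nat) (q : R) : R := real (Lub_Rbar (khinchin_ok k q)).

(* X_p : l_p(C) for p finite, c_0(C) for p = +oo *)
Definition inX (p : Rbar) (x : nat -> C) : Prop :=
  match p with
  | Finite r => ex_series (fun n => rpow (Cmod (x n)) r)
  | _ => is_lim_seq (fun n => Cmod (x n)) 0
  end.

Definition normX (p : Rbar) (x : nat -> C) : R :=
  match p with
  | Finite r => rpow (Series (fun n => rpow (Cmod (x n)) r)) (/ r)
  | _ => real (Lub_Rbar (fun s => exists n, s = Cmod (x n)))
  end.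

Definition conj_exp (p : Rbar) : R :=
  match p with Finite r => r / (r - 1) | _ => 1 end.

Definition slot_exp (p : Rbar) (k : nat) : Rbar :=
  match k with O => p | S _ => p_infty end.

(* an m-linear form is T : (nat -> (nat -> C)) -> C, x k = k-th argument (k < m) *)
Definition inDom (m : nat) (p : Rbar) (x : nat -> nat -> C) : Prop :=
  forall k, (k < m)%nat -> inX (slot_exp p k) (x k).

Definition upd (x : nat -> nat -> C) (k : nat) (v : nat -> C) : nat -> nat -> C :=
  fun l => if Nat.eqb l k then v else x l.

Definition only_first (m : nat) (T : (nat -> nat -> C) -> C) : Prop :=
  forall x y, (forall k, (k < m)%nat -> x k = y k) -> T x = T y.

Definition multilinear (m : nat) (p : Rbar) (T : (nat -> nat -> C) -> C) : Prop :=
  forall x k, inDom m p x -> (k < m)%nat ->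
  forall (y z : nat -> C) (a b : C),
    inX (slot_exp p k) y -> inX (slot_exp p k) z ->
    T (upd x k (fun n => a * y n + b * z n)%C)
    = (a * T (upd x k y) + b * T (upd x k z))%C.

Definition continuous_form (m : nat) (p : Rbar) (T : (nat -> nat -> C) -> C) : Prop :=
  forall x, inDom m p x -> forall eps, 0 < eps -> exists delta, 0 < delta /\
    forall y, inDom m p y ->
      (forall k, (k < m)%nat -> normX (slot_exp p k) (fun n => x k n - y k n)%C < delta) ->
      Cmod (T y - T x)%C < eps.

Definition opnorm (m : nat) (p : Rbar) (T : (nat -> nat -> C) -> C) : R :=
  real (Lub_Rbar (fun s => exists x, inDom m p x /\
     (forall k, (k < m)%nat -> normX (slot_exp p k) (x k) <= 1) /\ s = Cmod (T x))).

Definition unitv (i : nat) : nat -> C := fun n => if Nat.eqb n i then 1%C else 0%C.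

Definition mixed_sum (m : nat) (ps : R) (T : (nat -> nat -> C) -> C) (N : nat) : R :=
  rpow (fsum Rplus 0 N (fun i1 =>
     rpow (msum Rplus 0 (m - 1) N (fun i =>
        (Cmod (T (fun k => match k with O => unitv i1 | S k' => unitv (i k') end))) ^ 2))
       (ps / 2))) (/ ps).

(* Main.v *)
Require Import Defs.
From Stdlib Require Import Reals.
From Coquelicot Require Import Coquelicot.
Open Scope R_scope.
From Stdlib Require Import Lra Lia Psatz FunctionalExtensionality List.

Definition updR (th : nat -> R) (n : nat) (t : R) : nat -> R :=
  fun l => if Nat.eqb l n then t else th l.

Fixpoint EE (M o : nat) (f : (nat -> R) -> R) (th : nat -> R) : R :=
  match M with
  | O => f th
  | S M' => / (2 * PI) * RInt (fun t => EE M' o f (updR th (o + M') t)) 0 (2 * PI)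
  end.

Definition UC (f : (nat -> R) -> R) := forall eps, 0 < eps -> exists d, 0 < d /\
  forall th th', (forall l, Rabs (th l - th' l) < d) -> Rabs (f th - f th') < eps.
Definition Good (f : (nat -> R) -> R) := (exists B, forall th, Rabs (f th) <= B) /\ UC f.

Definition avg (g : R -> R) := / (2*PI) * RInt g 0 (2*PI).

Lemma UC_cont f th n t0 : UC f -> continuous (fun t => f (updR th n t)) t0.
Proof.
  intros H. apply continuity_pt_filterlim.
  intros eps Heps. destruct (H eps Heps) as [d [Hd H2]].
  exists d. split; auto. intros t [_ Ht]. simpl in *. unfold R_dist in *.
  apply H2. intro l. unfold updR. destruct (Nat.eqb l n); [exact Ht|].
  rewrite Rminus_eq_0, Rabs_R0; lra.
Qed.

Definition contg (g : R -> R) := forall t, continuous g t.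

Lemma cont_exRInt g : contg g -> ex_RInt g 0 (2*PI).
Proof. intros H. apply (ex_RInt_continuous (V:=R_CompleteNormedModule)). intros; apply H. Qed.

Lemma avg_plus g h : contg g -> contg h -> avg (fun t => g t + h t) = avg g + avg h.
Proof.
  intros Hg Hh. unfold avg. rewrite <- Rmult_plus_distr_l. f_equal.
  apply (RInt_plus (V:=R_CompleteNormedModule) g h); apply cont_exRInt; auto.
Qed.

Lemma avg_scal c g : contg g -> avg (fun t => c * g t) = c * avg g.
Proof.
  intros Hg. unfold avg.
  assert (E: RInt (fun t => c * g t) 0 (2*PI) = c * RInt g 0 (2*PI))
    by (apply (RInt_scal (V:=R_CompleteNormedModule)); apply cont_exRInt; auto).
  rewrite E; ring.
Qed.

Lemma avg_const c : avg (fun _ => c) = c.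
Proof.
  unfold avg. rewrite RInt_const. unfold scal; simpl; unfold mult; simpl.
  field. apply PI_neq0.
Qed.

Lemma avg_le g h : contg g -> contg h -> (forall t, g t <= h t) -> avg g <= avg h.
Proof.
  intros Hg Hh Hle. unfold avg. apply Rmult_le_compat_l.
  - left. apply Rinv_0_lt_compat. generalize PI_RGT_0; lra.
  - apply RInt_le; try apply cont_exRInt; auto. generalize PI_RGT_0; lra.
Qed.

Lemma avg_ext g h : (forall t, g t = h t) -> avg g = avg h.
Proof. intros H. unfold avg. f_equal. apply RInt_ext. intros; auto. Qed.

Lemma contg_const c : contg (fun _ => c).
Proof. intro t. apply continuous_const. Qed.

Lemma contg_plus g h : contg g -> contg h -> contg (fun t => g t + h t).
Proof. intros Hg Hh t. apply (@continuous_plus R_UniformSpace R_AbsRing R_NormedModule g h t (Hg t) (Hh t)). Qed.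

Lemma contg_scal c g : contg g -> contg (fun t => c * g t).
Proof. intros Hg t. apply (@continuous_scal_r R_UniformSpace R_AbsRing R_NormedModule c g t (Hg t)). Qed.

Lemma updR_diff th th' n t l : Rabs (updR th n t l - updR th' n t l) <= Rabs (th l - th' l).
Proof. unfold updR. destruct (Nat.eqb l n). rewrite Rminus_eq_0, Rabs_R0; apply Rabs_pos. lra. Qed.

Lemma EE_all M : forall o,
 (forall f g th, Good f -> Good g -> EE M o (fun x => f x + g x) th = EE M o f th + EE M o g th) /\
 (forall c f th, Good f -> EE M o (fun x => c * f x) th = c * EE M o f th) /\
 (forall f g th, Good f -> Good g -> (forall x, f x <= g x) -> EE M o f th <= EE M o g th) /\
 (forall c th, EE M o (fun _ => c) th = c) /\
 (forall f, Good f -> Good (EE M o f)).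
Proof.
  induction M as [|M IH]; intros o.
  - simpl. repeat split; auto.
    + intros; apply H. + intros; apply H.
  - destruct (IH o) as [Hp [Hs [Hm [Hc Hg]]]].
    assert (Hcont : forall f th, Good f -> contg (fun t => EE M o f (updR th (o+M) t))).
    { intros f th Gf t. apply UC_cont. apply (Hg f Gf). }
    assert (HE : forall f th, EE (S M) o f th = avg (fun t => EE M o f (updR th (o+M) t))) by reflexivity.
    split; [|split; [|split; [|split]]].
    + intros f g th Gf Gg. rewrite !HE. rewrite <- avg_plus by auto.
      apply avg_ext. intros t. apply Hp; auto.
    + intros c f th Gf. rewrite !HE. rewrite <- avg_scal by auto.
      apply avg_ext. intros t. apply Hs; auto.
    + intros f g th Gf Gg Hle. rewrite !HE.
      apply avg_le; [apply Hcont; auto | apply Hcont; auto | intros t; apply Hm; auto].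
    + intros c th. rewrite HE. transitivity (avg (fun _ => c)); [apply avg_ext; intros; apply Hc | apply avg_const].
    + intros f Gf. destruct (Hg f Gf) as [[B HB] HU]. split.
      * exists B. intros th. rewrite HE. apply Rabs_le. split.
        -- rewrite <- (avg_const (-B)) at 1. apply avg_le; auto using contg_const.
           intros t. specialize (HB (updR th (o+M) t)). apply Rabs_le_between in HB. lra.
        -- rewrite <- (avg_const B). apply avg_le; auto using contg_const.
           intros t. specialize (HB (updR th (o+M) t)). apply Rabs_le_between in HB. lra.
      * intros eps Heps. destruct (HU (eps/2) ltac:(lra)) as [d [Hd Hu]].
        exists d. split; auto. intros th th' Hth. rewrite !HE.
        assert (Hpt : forall t, Rabs (EE M o f (updR th (o+M) t) - EE M o f (updR th' (o+M) t)) < eps/2).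
        { intros t. apply Hu. intros l. eapply Rle_lt_trans. apply updR_diff. auto. }
        apply Rabs_lt_between. split.
        -- assert (avg (fun t => EE M o f (updR th' (o+M) t)) + (- (eps/2)) <= avg (fun t => EE M o f (updR th (o+M) t))).
           { replace (avg (fun t => EE M o f (updR th' (o+M) t)) + - (eps/2)) with
               (avg (fun t => EE M o f (updR th' (o+M) t)) + avg (fun _ => - (eps/2))) by (rewrite avg_const; auto).
             rewrite <- avg_plus by auto using contg_const.
             apply avg_le; auto. apply contg_plus; auto using contg_const.
             intros t. specialize (Hpt t). apply Rabs_lt_between in Hpt. lra. }
           lra.
        -- assert (avg (fun t => EE M o f (updR th (o+M) t)) <= avg (fun t => EE M o f (updR th' (o+M) t)) + (eps/2)).
           { replace (avg (fun t => EE M o f (updR th' (o+M) t)) + (eps/2)) with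
               (avg (fun t => EE M o f (updR th' (o+M) t)) + avg (fun _ => eps/2)) by (rewrite avg_const; auto).
             rewrite <- avg_plus by auto using contg_const.
             apply avg_le; auto. apply contg_plus; auto using contg_const.
             intros t. specialize (Hpt t). apply Rabs_lt_between in Hpt. lra. }
           lra.
Qed.

Lemma EE_plus M o f g th : Good f -> Good g -> EE M o (fun x => f x + g x) th = EE M o f th + EE M o g th.
Proof. apply (EE_all M o). Qed.
Lemma EE_scal M o c f th : Good f -> EE M o (fun x => c * f x) th = c * EE M o f th.
Proof. apply (EE_all M o). Qed.
Lemma EE_mono M o f g th : Good f -> Good g -> (forall x, f x <= g x) -> EE M o f th <= EE M o g th.
Proof. apply (EE_all M o). Qed.
Lemma EE_const M o c th : EE M o (fun _ => c) th = c.
Proof. apply (EE_all M o). Qed.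
Lemma EE_good M o f : Good f -> Good (EE M o f).
Proof. apply (EE_all M o). Qed.

Lemma EE_ext M o f g th : (forall x, f x = g x) -> EE M o f th = EE M o g th.
Proof. intros H. replace g with f; auto. extensionality x; auto. Qed.

Lemma EE_ext_out M : forall o f g th0,
  (forall th, (forall l, (l < o \/ o + M <= l)%nat -> th l = th0 l) -> f th = g th) ->
  EE M o f th0 = EE M o g th0.
Proof.
  induction M as [|M IH]; intros o f g th0 H.
  - simpl. apply H. auto.
  - simpl. f_equal. apply RInt_ext. intros t _. apply IH.
    intros th Hth. apply H. intros l Hl. rewrite Hth by lia. unfold updR.
    destruct (Nat.eqb_spec l (o+M)); auto. lia.
Qed.

Lemma updR_comm th a b s t : a <> b -> updR (updR th a s) b t = updR (updR th b t) a s.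
Proof.
  intros Hab. extensionality l. unfold updR.
  destruct (Nat.eqb_spec l b); destruct (Nat.eqb_spec l a); auto. lia.
Qed.

Lemma EE_comm_upd M : forall o c t f th0, (c < o \/ o + M <= c)%nat ->
  EE M o (fun th => f (updR th c t)) th0 = EE M o f (updR th0 c t).
Proof.
  induction M as [|M IH]; intros o c t f th0 Hc.
  - reflexivity.
  - simpl. f_equal. apply RInt_ext. intros s _. rewrite IH by lia.
    rewrite updR_comm by lia. reflexivity.
Qed.

Lemma steinE_EE n : forall f, steinE n f = EE n 0 f (fun _ => 0).
Proof.
  induction n as [|n IH]; intros f.
  - reflexivity.
  - simpl. f_equal. apply RInt_ext. intros t _. rewrite IH.
    apply (EE_comm_upd n 0 n t f (fun _ => 0)). lia.
Qed.

Lemma EE_split M M' : forall o f th, EE (M + M') o f th = EE M' (o + M) (EE M o f) th.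
Proof.
  induction M' as [|M' IH]; intros o f th.
  - rewrite Nat.add_0_r. reflexivity.
  - rewrite Nat.add_succ_r. simpl. f_equal. apply RInt_ext. intros t _.
    rewrite IH. rewrite Nat.add_assoc. reflexivity.
Qed.

Lemma good_const c : Good (fun _ => c).
Proof.
  split. exists (Rabs c); intros; lra.
  intros eps He. exists 1. split. lra. intros. rewrite Rminus_eq_0, Rabs_R0; lra.
Qed.

Lemma good_plus f g : Good f -> Good g -> Good (fun x => f x + g x).
Proof.
  intros [[B1 H1] U1] [[B2 H2] U2]. split.
  - exists (B1 + B2). intros th. eapply Rle_trans. apply Rabs_triang. specialize (H1 th); specialize (H2 th); lra.
  - intros eps He. destruct (U1 (eps/2) ltac:(lra)) as [d1 [Hd1 K1]].
    destruct (U2 (eps/2) ltac:(lra)) as [d2 [Hd2 K2]].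
    exists (Rmin d1 d2). split. apply Rmin_pos; auto.
    intros th th' Hth.
    assert (A1 := K1 th th' (fun l => Rlt_le_trans _ _ _ (Hth l) (Rmin_l _ _))).
    assert (A2 := K2 th th' (fun l => Rlt_le_trans _ _ _ (Hth l) (Rmin_r _ _))).
    replace (f th + g th - (f th' + g th')) with ((f th - f th') + (g th - g th')) by ring.
    eapply Rle_lt_trans. apply Rabs_triang. lra.
Qed.

Lemma good_scal c f : Good f -> Good (fun x => c * f x).
Proof.
  intros [[B1 H1] U1]. split.
  - exists (Rabs c * B1). intros th. rewrite Rabs_mult. apply Rmult_le_compat_l. apply Rabs_pos. auto.
  - intros eps He. destruct (U1 (eps / (Rabs c + 1))) as [d [Hd K]].
    { apply Rdiv_lt_0_compat; auto. generalize (Rabs_pos c); lra. }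
    exists d. split; auto. intros th th' Hth. specialize (K th th' Hth).
    replace (c * f th - c * f th') with (c * (f th - f th')) by ring.
    rewrite Rabs_mult.
    assert (0 < Rabs c + 1) by (generalize (Rabs_pos c); lra).
    apply Rle_lt_trans with ((Rabs c + 1) * Rabs (f th - f th')).
    apply Rmult_le_compat_r. apply Rabs_pos. lra.
    apply Rmult_lt_reg_l with (/ (Rabs c + 1)). apply Rinv_0_lt_compat; auto.
    rewrite <- Rmult_assoc, Rinv_l by lra. unfold Rdiv in K. lra.
Qed.



Lemma good_ext f g : (forall x, f x = g x) -> Good f -> Good g.
Proof. intros H. replace g with f; auto. extensionality x; auto. Qed.

Lemma good_minus f g : Good f -> Good g -> Good (fun x => f x - g x).
Proof.
  intros Hf Hg. apply (good_ext (fun x => f x + (-1) * g x)). intros; ring.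
  apply good_plus; auto. apply good_scal; auto.
Qed.

Lemma good_mult f g : Good f -> Good g -> Good (fun x => f x * g x).
Proof.
  intros [[B1 H1] U1] [[B2 H2] U2].
  assert (B1p : 0 <= B1) by (specialize (H1 (fun _ => 0)); generalize (Rabs_pos (f (fun _ => 0))); lra).
  assert (B2p : 0 <= B2) by (specialize (H2 (fun _ => 0)); generalize (Rabs_pos (g (fun _ => 0))); lra).
  split.
  - exists (B1 * B2). intros th. rewrite Rabs_mult. apply Rmult_le_compat; auto using Rabs_pos.
  - intros eps He.
    destruct (U1 (eps / (2 * (B2 + 1)))) as [d1 [Hd1 K1]].
    { apply Rdiv_lt_0_compat; lra. }
    destruct (U2 (eps / (2 * (B1 + 1)))) as [d2 [Hd2 K2]].
    { apply Rdiv_lt_0_compat; lra. }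
    exists (Rmin d1 d2). split. apply Rmin_pos; auto.
    intros th th' Hth.
    assert (A1 := K1 th th' (fun l => Rlt_le_trans _ _ _ (Hth l) (Rmin_l _ _))).
    assert (A2 := K2 th th' (fun l => Rlt_le_trans _ _ _ (Hth l) (Rmin_r _ _))).
    replace (f th * g th - f th' * g th') with ((f th - f th') * g th + f th' * (g th - g th')) by ring.
    eapply Rle_lt_trans. apply Rabs_triang. rewrite !Rabs_mult.
    assert (E1 : Rabs (f th - f th') * Rabs (g th) <= eps / (2 * (B2 + 1)) * (B2 + 1)).
    { apply Rmult_le_compat; auto using Rabs_pos. lra. specialize (H2 th); lra. }
    assert (E2 : Rabs (f th') * Rabs (g th - g th') <= (B1 + 1) * (eps / (2 * (B1 + 1)))).
    { apply Rmult_le_compat; auto using Rabs_pos. specialize (H1 th'); lra. lra. }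
    assert (Rabs (f th - f th') * Rabs (g th) < eps / 2 \/ Rabs (f th') * Rabs (g th - g th') < eps/2).
    { destruct (Req_dec (Rabs (g th)) 0) as [Z|Z].
      - left. rewrite Z. lra.
      - left. apply Rle_lt_trans with (Rabs (f th - f th') * (B2 + 1)).
        apply Rmult_le_compat_l. apply Rabs_pos. specialize (H2 th); lra.
        apply Rlt_le_trans with (eps / (2 * (B2 + 1)) * (B2 + 1)).
        apply Rmult_lt_compat_r; lra. right; field; lra. }
    replace (eps / (2 * (B2 + 1)) * (B2 + 1)) with (eps/2) in E1 by (field; lra).
    replace ((B1 + 1) * (eps / (2 * (B1 + 1)))) with (eps/2) in E2 by (field; lra).
    assert (Rabs (f th') * Rabs (g th - g th') < eps/2).
    { apply Rle_lt_trans with ((B1 + 1) * Rabs (g th - g th')).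
      apply Rmult_le_compat_r. apply Rabs_pos. specialize (H1 th'); lra.
      apply Rlt_le_trans with ((B1 + 1) * (eps / (2 * (B1 + 1)))).
      apply Rmult_lt_compat_l; lra. right; field; lra. }
    destruct H; lra.
Qed.

Lemma good_comp (phi : R -> R) f a b : a <= b -> (forall th, a <= f th <= b) -> UC f ->
  (forall x, a <= x <= b -> continuity_pt phi x) -> Good (fun th => phi (f th)).
Proof.
  intros Hab Hr Uf Hc. split.
  - destruct (continuity_ab_maj phi a b Hab Hc) as [Mx [HM _]].
    destruct (continuity_ab_min phi a b Hab Hc) as [mx [Hm _]].
    exists (Rabs (phi Mx) + Rabs (phi mx)). intros th. specialize (HM (f th) (Hr th)).
    specialize (Hm (f th) (Hr th)). apply Rabs_le.
    generalize (Rabs_pos (phi Mx)) (Rabs_pos (phi mx)) (Rle_abs (phi Mx)) (Rle_abs (- phi mx)).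
    rewrite Rabs_Ropp. lra.
  - intros eps He. destruct (Heine_cor2 Hc (mkposreal eps He)) as [[d Hd] Hh]. simpl in Hh.
    destruct (Uf d Hd) as [d' [Hd' K]]. exists d'. split; auto.
Qed.

Lemma good_cos c : Good (fun th => cos (th c)).
Proof.
  split. exists 1. intros; apply Rabs_le. apply COS_bound.
  intros eps He. exists eps. split; auto. intros th th' Hth.
  destruct (MVT_abs cos (fun x => - sin x) (th' c) (th c)) as [z [Hz _]].
  { intros; apply derivable_pt_lim_cos. }
  rewrite Hz. rewrite Rabs_Ropp. apply Rle_lt_trans with (1 * Rabs (th c - th' c)).
  apply Rmult_le_compat_r. apply Rabs_pos. apply Rabs_le. apply SIN_bound. rewrite Rmult_1_l; auto.
Qed.

Lemma good_sin c : Good (fun th => sin (th c)).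
Proof.
  split. exists 1. intros; apply Rabs_le. apply SIN_bound.
  intros eps He. exists eps. split; auto. intros th th' Hth.
  destruct (MVT_abs sin cos (th' c) (th c)) as [z [Hz _]].
  { intros; apply derivable_pt_lim_sin. }
  rewrite Hz. apply Rle_lt_trans with (1 * Rabs (th c - th' c)).
  apply Rmult_le_compat_r. apply Rabs_pos. apply Rabs_le. apply COS_bound. rewrite Rmult_1_l; auto.
Qed.

Lemma good_bound f : Good f -> exists B, 0 <= B /\ forall th, Rabs (f th) <= B.
Proof.
  intros [[B H] _]. exists B. split; auto. specialize (H (fun _ => 0)).
  generalize (Rabs_pos (f (fun _ => 0))); lra.
Qed.

Lemma good_sqrt f : Good f -> (forall th, 0 <= f th) -> Good (fun th => sqrt (f th)).
Proof.
  intros Gf Hp. destruct (good_bound f Gf) as [B [HB0 HB]].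
  apply (good_comp sqrt f 0 B); auto. intros th; split; auto. specialize (HB th).
  apply Rabs_le_between in HB; lra. apply Gf. intros; apply continuity_pt_sqrt; lra.
Qed.

Lemma rpow_pos x q : 0 < x -> rpow x q = Rpower x q.
Proof. intros H. unfold rpow. destruct (Rlt_dec 0 x); auto. lra. Qed.
Lemma rpow_nonpos x q : x <= 0 -> rpow x q = 0.
Proof. intros H. unfold rpow. destruct (Rlt_dec 0 x); auto. lra. Qed.
Lemma rpow_ge0 x q : 0 <= rpow x q.
Proof. unfold rpow. destruct (Rlt_dec 0 x). unfold Rpower. left; apply exp_pos. lra. Qed.

Lemma rpow_cont q x : 0 < q -> 0 <= x -> continuity_pt (fun y => rpow y q) x.
Proof.
  intros Hq Hx. destruct Hx as [Hx|Hx].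
  - assert (Hc : continuity_pt (fun y => Rpower y q) x).
    { apply derivable_continuous_pt. exists (q * Rpower x (q - 1)). apply derivable_pt_lim_power; auto. }
    intros eps He. destruct (Hc eps He) as [alp [Ha K]].
    exists (Rmin alp x). split. apply Rmin_pos; lra.
    intros y [_ Hy]. simpl in *. unfold R_dist in *.
    assert (0 < y). { assert (Rabs (y - x) < x) by (eapply Rlt_le_trans; [exact Hy| apply Rmin_r]).
      apply Rabs_lt_between in H; lra. }
    rewrite !rpow_pos by auto. destruct (Req_dec y x) as [->|Hne].
    rewrite Rminus_eq_0, Rabs_R0; lra.
    apply K. split. split. exact I. auto.
    eapply Rlt_le_trans; [exact Hy | apply Rmin_l].
  - subst x. intros eps He. exists (Rpower eps (/q)). split. unfold Rpower; apply exp_pos.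
    intros y [_ Hy]. simpl in *. unfold R_dist in *. rewrite (rpow_nonpos 0) by lra.
    destruct (Rle_lt_dec y 0) as [Hy0|Hy0].
    + rewrite rpow_nonpos by auto. rewrite Rminus_0_r, Rabs_R0; auto.
    + rewrite rpow_pos by auto. rewrite Rminus_0_r in Hy |- *.
      rewrite Rabs_pos_eq in Hy by lra. rewrite Rabs_pos_eq by (unfold Rpower; left; apply exp_pos).
      unfold Rpower in *. apply ln_increasing in Hy; auto. rewrite ln_exp in Hy.
      rewrite <- (exp_ln eps) by auto. apply exp_increasing.
      apply Rmult_lt_compat_l with (r := q) in Hy; auto.
      replace (q * (/ q * ln eps)) with (ln eps) in Hy by (field; lra). lra.
Qed.

Lemma good_rpow f q : 0 < q -> Good f -> (forall th, 0 <= f th) -> Good (fun th => rpow (f th) q).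
Proof.
  intros Hq Gf Hp. destruct (good_bound f Gf) as [B [HB0 HB]].
  apply (good_comp (fun y => rpow y q) f 0 B); auto. intros th; split; auto. specialize (HB th).
  apply Rabs_le_between in HB; lra. apply Gf. intros; apply rpow_cont; lra.
Qed.

Definition CGood (g : (nat -> R) -> C) := Good (fun x => fst (g x)) /\ Good (fun x => snd (g x)).

Lemma cgood_const c : CGood (fun _ => c).
Proof. split; apply good_const. Qed.

Lemma cgood_plus f g : CGood f -> CGood g -> CGood (fun x => Cplus (f x) (g x)).
Proof. intros [A B] [C0 D]. split; simpl; apply good_plus; auto. Qed.

Lemma cgood_mult f g : CGood f -> CGood g -> CGood (fun x => Cmult (f x) (g x)).
Proof.
  intros [A B] [C0 D]. split; simpl.
  apply good_minus; apply good_mult; auto.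
  apply good_plus; apply good_mult; auto.
Qed.

Lemma cgood_cis c : CGood (fun th => cis (th c)).
Proof. split; simpl. apply good_cos. apply good_sin. Qed.

Lemma good_Cmod g : CGood g -> Good (fun x => Cmod (g x)).
Proof.
  intros [A B]. unfold Cmod. apply good_sqrt.
  apply good_plus; [apply (good_ext (fun x => fst (g x) * fst (g x))) | apply (good_ext (fun x => snd (g x) * snd (g x)))];
   try (intros; simpl; ring); apply good_mult; auto.
  intros. apply Rplus_le_le_0_compat; apply pow2_ge_0.
Qed.

Lemma good_Cmod_rpow g q : 0 < q -> CGood g -> Good (fun x => rpow (Cmod (g x)) q).
Proof. intros Hq G. apply good_rpow; auto. apply good_Cmod; auto. intros; apply Cmod_ge_0. Qed.

Lemma avg_trig a b c d e f :
  avg (fun t => a + b * cos t + c * sin t + d * (cos t)^2 + e * (sin t * cos t) + f * (sin t)^2)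
  = a + (d + f) / 2.
Proof.
  set (F := fun t => a * t + b * sin t - c * cos t + d * ((t + sin t * cos t)/2)
                     + e * ((sin t)^2/2) + f * ((t - sin t * cos t)/2)).
  assert (H : is_RInt (fun t => a + b * cos t + c * sin t + d * (cos t)^2 + e * (sin t * cos t) + f * (sin t)^2)
                0 (2*PI) (minus (F (2*PI)) (F 0))).
  { apply (is_RInt_derive (V:=R_CompleteNormedModule)).
    - intros x _. unfold F. auto_derive; auto.
      assert (Hs := sin2_cos2 x). unfold Rsqr in Hs.
      assert (Hc : cos x * cos x = 1 - sin x * sin x) by lra.
      ring_simplify. assert (Hc2 : cos x ^ 2 = 1 - sin x ^ 2) by (simpl; lra).
      rewrite Hc2. field.
    - intros x _. apply continuity_pt_filterlim. reg.
  }
  unfold avg. rewrite (is_RInt_unique _ _ _ _ H). unfold F, minus, plus, opp; simpl.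
  rewrite sin_2PI, cos_2PI, sin_0, cos_0. field. apply PI_neq0.
Qed.

Lemma EE_S M o f th : EE (S M) o f th = avg (fun t => EE M o f (updR th (o+M) t)).
Proof. reflexivity. Qed.

Definition depw (o M : nat) (f : (nat -> R) -> R) :=
  forall th th', (forall l, (o <= l < o + M)%nat -> th l = th' l) -> f th = f th'.

Lemma EE_indep M : forall o f th0 th1, depw o M f -> EE M o f th0 = EE M o f th1.
Proof.
  induction M as [|M IH]; intros o f th0 th1 Hd.
  - simpl. apply Hd. intros; lia.
  - rewrite !EE_S. apply avg_ext. intros t.
    rewrite <- (EE_comm_upd M o (o+M)%nat t f th0) by lia. rewrite <- (EE_comm_upd M o (o+M)%nat t f th1) by lia.
    apply IH. intros th th' H. apply Hd. intros l Hl. unfold updR.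
    destruct (Nat.eqb_spec l (o+M)); auto. apply H. lia.
Qed.

Fixpoint lsum (l : list (R * ((nat -> R) -> R))) (x : nat -> R) : R :=
  match l with nil => 0 | (a, f) :: l' => a * f x + lsum l' x end.
Fixpoint lsumE M o (l : list (R * ((nat -> R) -> R))) (x : nat -> R) : R :=
  match l with nil => 0 | (a, f) :: l' => a * EE M o f x + lsumE M o l' x end.
Definition allGood (l : list (R * ((nat -> R) -> R))) := List.Forall (fun p => Good (snd p)) l.

Lemma good_lsum l : allGood l -> Good (lsum l).
Proof.
  induction l as [|[a f] l IH]; intros H.
  - apply (good_ext (fun _ => 0)). reflexivity. apply good_const.
  - inversion H; subst. simpl in *. apply (good_ext (fun x => a * f x + lsum l x)). reflexivity.
    apply good_plus. apply good_scal; auto. apply IH; auto.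
Qed.

Lemma EE_lsum M o l th : allGood l -> EE M o (lsum l) th = lsumE M o l th.
Proof.
  induction l as [|[a f] l IH]; intros H.
  - simpl. apply (EE_const M o 0).
  - inversion H; subst. simpl in *.
    change (lsum ((a, f) :: l)) with (fun x => a * f x + lsum l x).
    rewrite EE_plus. rewrite EE_scal. rewrite IH; auto. auto.
    apply good_scal; auto. apply good_lsum; auto.
Qed.

Lemma lsumE_indep M o l th0 th1 : List.Forall (fun p => depw o M (snd p)) l -> lsumE M o l th0 = lsumE M o l th1.
Proof.
  induction l as [|[a f] l IH]; intros H; simpl; auto.
  inversion H; subst. simpl in *. rewrite IH by auto. rewrite (EE_indep M o f th0 th1); auto.
Qed.

Lemma avg_uv c1 c2 a b d e g h :
  avg (fun t => a + b * (c1 * cos t - c2 * sin t) + d * (c1 * sin t + c2 * cos t)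
      + e * (c1 * cos t - c2 * sin t)^2 + g * ((c1 * cos t - c2 * sin t) * (c1 * sin t + c2 * cos t))
      + h * (c1 * sin t + c2 * cos t)^2)
  = a + (e + h) * (c1^2 + c2^2) / 2.
Proof.
  rewrite (avg_ext _ (fun t => a + (b * c1 + d * c2) * cos t + (- b * c2 + d * c1) * sin t
     + (e * c1^2 + g * c1 * c2 + h * c2^2) * (cos t)^2
     + (- 2 * e * c1 * c2 + g * (c1^2 - c2^2) + 2 * h * c1 * c2) * (sin t * cos t)
     + (e * c2^2 - g * c1 * c2 + h * c1^2) * (sin t)^2)).
  rewrite avg_trig. field.
  intros t. ring.
Qed.

Definition Lin (c : nat -> C) (o N : nat) (th : nat -> R) : C :=
  fsum Cplus 0%C N (fun n => Cmult (c n) (cis (th (o + n)%nat))).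

Lemma cgood_Lin c o N : CGood (Lin c o N).
Proof.
  induction N as [|N IH].
  - apply cgood_const.
  - unfold Lin; simpl. apply cgood_plus. apply IH. apply cgood_mult. apply cgood_const. apply cgood_cis.
Qed.

Lemma depw_Lin c o N (g : C -> R) : depw o N (fun th => g (Lin c o N th)).
Proof.
  intros th th' H. f_equal. unfold Lin. induction N as [|N IH]; simpl; auto.
  rewrite IH by (intros; apply H; lia). rewrite (H (o+N)%nat) by lia. reflexivity.
Qed.

Lemma Cmod2_fs z : Cmod z ^ 2 = fst z ^ 2 + snd z ^ 2.
Proof. rewrite Cmod2_alt. reflexivity. Qed.

Lemma depw_plus o M f g : depw o M f -> depw o M g -> depw o M (fun th => f th + g th).
Proof. intros Hf Hg th th' H. rewrite (Hf th th'), (Hg th th'); auto. Qed.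
Lemma depw_mult o M f g : depw o M f -> depw o M g -> depw o M (fun th => f th * g th).
Proof. intros Hf Hg th th' H. rewrite (Hf th th'), (Hg th th'); auto. Qed.
Lemma depw_const o M c : depw o M (fun _ => c).
Proof. intros th th' H. auto. Qed.
Ltac depw_tac := repeat (first [apply depw_plus | apply depw_mult | apply depw_const | assumption]).

Lemma fsum_S {A : Type} (plus : A -> A -> A) z N g : fsum plus z (S N) g = plus (fsum plus z N g) (g N).
Proof. reflexivity. Qed.

Lemma Lin_S c o N th : Lin c o (S N) th = Cplus (Lin c o N th) (Cmult (c N) (cis (th (o + N)%nat))).
Proof. reflexivity. Qed.

Lemma uv_rho c1 c2 t : (c1 * cos t - c2 * sin t)^2 + (c1 * sin t + c2 * cos t)^2 = c1^2 + c2^2.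
Proof.
  assert (Hs := sin2_cos2 t). unfold Rsqr in Hs.
  replace ((c1 * cos t - c2 * sin t)^2 + (c1 * sin t + c2 * cos t)^2) with
    ((c1^2 + c2^2) * (sin t * sin t + cos t * cos t)) by ring. rewrite Hs; ring.
Qed.

Ltac good_tac := repeat (first [ apply good_plus | apply good_mult | apply good_scal | apply good_const | assumption ]).

Lemma Lin_moments N : forall o c th0,
  EE N o (fun th => Cmod (Lin c o N th) ^ 2) th0 = fsum Rplus 0 N (fun n => Cmod (c n) ^ 2) /\
  EE N o (fun th => Cmod (Lin c o N th) ^ 4) th0 <= 2 * (fsum Rplus 0 N (fun n => Cmod (c n) ^ 2)) ^ 2.
Proof.
  induction N as [|N IH]; intros o c th0.
  - simpl. unfold Lin; simpl. rewrite Cmod_0. split; [ring| lra].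
  - destruct (IH o c th0) as [H2 H4].
    set (X := fun th => fst (Lin c o N th)). set (Y := fun th => snd (Lin c o N th)).
    assert (GX : Good X) by apply (cgood_Lin c o N).
    assert (GY : Good Y) by apply (cgood_Lin c o N).
    assert (DX : forall g : R -> R, depw o N (fun th => g (X th))).
    { intros g. apply (depw_Lin c o N (fun z => g (fst z))). }
    assert (DY : forall g : R -> R, depw o N (fun th => g (Y th))).
    { intros g. apply (depw_Lin c o N (fun z => g (snd z))). }
    assert (DXY : forall g : R -> R -> R, depw o N (fun th => g (X th) (Y th))).
    { intros g. apply (depw_Lin c o N (fun z => g (fst z) (snd z))). }
    assert (D1 : depw o N (fun _ => 1)) by (intros ? ? ?; auto).
    assert (DX0 : depw o N X) by apply (DX (fun a => a)).
    assert (DY0 : depw o N Y) by apply (DY (fun a => a)).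
    destruct (c N) as [c1 c2] eqn:Ec.
    set (rho := c1^2 + c2^2).
    assert (Hrho: Cmod (c N) ^ 2 = rho) by (rewrite Cmod2_fs, Ec; reflexivity).
    set (A := fun th => X th * X th + Y th * Y th).
    assert (HA : EE N o A th0 = fsum Rplus 0 N (fun n => Cmod (c n) ^ 2)).
    { rewrite <- H2. apply EE_ext. intros th. unfold A, X, Y. rewrite Cmod2_fs. ring. }
    assert (HA2 : EE N o A th0 = EE N o (fun th => X th * X th) th0 + EE N o (fun th => Y th * Y th) th0).
    { apply EE_plus; good_tac. }
    assert (HA4 : EE N o (fun th => A th * A th) th0 <= 2 * (fsum Rplus 0 N (fun n => Cmod (c n) ^ 2)) ^ 2).
    { replace (EE N o (fun th => A th * A th) th0) with (EE N o (fun th => Cmod (Lin c o N th) ^ 4) th0); [exact H4|].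
      apply EE_ext. intros th. unfold A, X, Y. replace (Cmod (Lin c o N th) ^ 4) with ((Cmod (Lin c o N th) ^ 2)^2) by ring.
      rewrite Cmod2_fs. ring. }
    assert (Hw : forall th t, th (o + N)%nat = t ->
       Lin c o (S N) th = Cplus (Lin c o N th) (c1 * cos t - c2 * sin t, c1 * sin t + c2 * cos t)).
    { intros th t Ht. rewrite Lin_S, Ht, Ec. reflexivity. }
    assert (Hout : forall t th, (forall l, (l < o \/ o + N <= l)%nat -> th l = updR th0 (o + N) t l) -> th (o+N)%nat = t).
    { intros t th H. rewrite H by lia. unfold updR. rewrite Nat.eqb_refl. reflexivity. }
    split.
    + rewrite EE_S.
      rewrite (avg_ext _ (fun t => (rho + EE N o A th0) + (2 * EE N o X th0) * (c1 * cos t - c2 * sin t)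
          + (2 * EE N o Y th0) * (c1 * sin t + c2 * cos t) + 0 * (c1 * cos t - c2 * sin t)^2
          + 0 * ((c1 * cos t - c2 * sin t) * (c1 * sin t + c2 * cos t)) + 0 * (c1 * sin t + c2 * cos t)^2)).
      * rewrite avg_uv. rewrite fsum_S. rewrite <- HA, Hrho. fold rho. lra.
      * intros t. set (u := c1 * cos t - c2 * sin t). set (v := c1 * sin t + c2 * cos t).
        assert (Huv : u^2 + v^2 = rho) by apply uv_rho.
        rewrite (EE_ext_out N o _ (lsum ((rho, fun _ => 1) :: (1, A) :: (2 * u, X) :: (2 * v, Y) :: nil))).
        -- rewrite EE_lsum. rewrite (lsumE_indep N o _ _ th0).
           simpl. rewrite EE_const. ring.
           repeat first [apply List.Forall_nil | apply List.Forall_cons]; simpl; unfold A; depw_tac.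
           repeat first [apply List.Forall_nil | apply List.Forall_cons]; simpl; good_tac.
        -- intros th Hth. rewrite (Hw th t (Hout t th Hth)). rewrite Cmod2_fs. simpl. unfold A, X, Y.
           fold u v. rewrite <- Huv. ring.
    + rewrite EE_S.
      rewrite (avg_ext _ (fun t => (rho^2 + EE N o (fun th => A th * A th) th0 + 2 * rho * EE N o A th0)
          + (4 * EE N o (fun th => A th * X th) th0 + 4 * rho * EE N o X th0) * (c1 * cos t - c2 * sin t)
          + (4 * EE N o (fun th => A th * Y th) th0 + 4 * rho * EE N o Y th0) * (c1 * sin t + c2 * cos t)
          + (4 * EE N o (fun th => X th * X th) th0) * (c1 * cos t - c2 * sin t)^2
          + (8 * EE N o (fun th => X th * Y th) th0) * ((c1 * cos t - c2 * sin t) * (c1 * sin t + c2 * cos t))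
          + (4 * EE N o (fun th => Y th * Y th) th0) * (c1 * sin t + c2 * cos t)^2)).
      * rewrite avg_uv. rewrite fsum_S. rewrite Hrho. fold rho.
        set (m2 := fsum Rplus 0 N (fun n => Cmod (c n) ^ 2)) in *.
        assert (0 <= rho) by (unfold rho; nra).
        assert (0 <= m2) by (rewrite <- HA; unfold A; apply Rle_trans with (EE N o (fun _ => 0) th0);
           [rewrite EE_const; lra | apply EE_mono; good_tac; intros; nra]).
        rewrite HA in HA2. nra.
      * intros t. set (u := c1 * cos t - c2 * sin t). set (v := c1 * sin t + c2 * cos t).
        assert (Huv : u^2 + v^2 = rho) by apply uv_rho.
        rewrite (EE_ext_out N o _ (lsum ((rho^2, fun _ => 1) :: (1, fun th => A th * A th)
           :: (4 * u, fun th => A th * X th) :: (4 * v, fun th => A th * Y th) :: (2 * rho, A)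
           :: (4 * u^2, fun th => X th * X th) :: (8 * (u * v), fun th => X th * Y th)
           :: (4 * v^2, fun th => Y th * Y th) :: (4 * rho * u, X) :: (4 * rho * v, Y) :: nil))).
        -- rewrite EE_lsum. rewrite (lsumE_indep N o _ _ th0).
           simpl. rewrite EE_const. ring.
           repeat first [apply List.Forall_nil | apply List.Forall_cons]; simpl; unfold A; depw_tac.
           repeat first [apply List.Forall_nil | apply List.Forall_cons]; simpl; unfold A; good_tac.
        -- intros th Hth. rewrite (Hw th t (Hout t th Hth)). fold u v.
           replace (Cmod (Cplus (Lin c o N th) (u, v)) ^ 4) with ((Cmod (Cplus (Lin c o N th) (u, v)) ^ 2)^2) by ring.
           rewrite Cmod2_fs. simpl. unfold A, X, Y.
           set (x := fst (Lin c o N th)). set (y := snd (Lin c o N th)).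
           replace ((x + u) ^ 2 + (y + v) ^ 2) with (x * x + y * y + 2 * (x * u + y * v) + rho)
             by (rewrite <- Huv; ring).
           rewrite <- Huv. ring.
Qed.

Lemma good_pow f n : Good f -> Good (fun x => f x ^ n).
Proof.
  intros G. induction n as [|n IH].
  - apply (good_ext (fun _ => 1)). intros; reflexivity. apply good_const.
  - apply (good_ext (fun x => f x * f x ^ n)). intros; reflexivity. apply good_mult; auto.
Qed.

Lemma EE_nonneg M o f th : Good f -> (forall x, 0 <= f x) -> 0 <= EE M o f th.
Proof.
  intros G H. rewrite <- (EE_const M o 0 th). apply EE_mono; auto. apply good_const.
Qed.

Lemma Lin_L1 N o c th0 :
  sqrt (fsum Rplus 0 N (fun n => Cmod (c n) ^ 2)) <= sqrt 2 * EE N o (fun th => Cmod (Lin c o N th)) th0.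
Proof.
  destruct (Lin_moments N o c th0) as [H2 H4].
  set (m2 := fsum Rplus 0 N (fun n => Cmod (c n) ^ 2)) in *.
  set (F := fun th => Cmod (Lin c o N th)).
  assert (GF : Good F) by (apply good_Cmod, cgood_Lin).
  assert (M1p : 0 <= EE N o F th0) by (apply EE_nonneg; auto; intros; apply Cmod_ge_0).
  assert (m2p : 0 <= m2) by (rewrite <- H2; apply EE_nonneg; [apply good_pow; auto | intros; apply pow2_ge_0]).
  destruct m2p as [m2p | m2z].
  2:{ rewrite <- m2z, sqrt_0. apply Rmult_le_pos; auto. apply sqrt_pos. }
  set (a := sqrt (2 * m2)).
  assert (ap : 0 < a) by (apply sqrt_lt_R0; lra).
  assert (a2 : a * a = 2 * m2) by (apply sqrt_sqrt; lra).
  assert (Hpt : forall th, F th ^ 2 <= (2 * a / 3) * F th + / (3 * a^2) * F th ^ 4).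
  { intros th. set (z := F th). assert (z0 : 0 <= z) by (unfold z, F; apply Cmod_ge_0).
    assert (0 <= z * (z - a)^2 * (z + 2 * a)).
    { apply Rmult_le_pos. apply Rmult_le_pos. exact z0. apply pow2_ge_0. lra. }
    assert (E : z * (z - a)^2 * (z + 2*a) = z^4 - 3*a^2*z^2 + 2*a^3*z) by ring.
    assert (a2p : 0 < 3 * a^2) by nra.
    replace ((2*a/3) * z + /(3*a^2) * z^4) with ((2*a^3*z + z^4) / (3*a^2)) by (field; lra).
    apply (Rmult_le_reg_l (3*a^2)); auto.
    replace (3*a^2 * ((2*a^3*z + z^4)/(3*a^2))) with (2*a^3*z+z^4) by (field; lra). lra. }
  assert (HE : EE N o (fun th => F th ^ 2) th0 <= (2 * a / 3) * EE N o F th0 + / (3 * a^2) * EE N o (fun th => F th ^ 4) th0).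
  { rewrite <- EE_scal, <- EE_scal, <- EE_plus; try apply good_scal; try apply good_pow; auto.
    apply EE_mono; auto. apply good_pow; auto. apply good_plus; apply good_scal; try apply good_pow; auto. }
  assert (H2' : EE N o (fun th => F th ^ 2) th0 = m2) by exact H2.
  assert (H4' : EE N o (fun th => F th ^ 4) th0 <= 2 * m2 ^ 2) by exact H4.
  rewrite H2' in HE.
  assert (/ (3 * a^2) * EE N o (fun th => F th ^ 4) th0 <= m2 / 3).
  { apply Rle_trans with (/ (3 * a^2) * (2 * m2^2)).
    apply Rmult_le_compat_l; auto. left; apply Rinv_0_lt_compat; nra.
    replace (a^2) with (2 * m2) by (rewrite <- a2; ring). right; field; lra. }
  assert (m2 <= a * EE N o F th0) by nra.
  assert (Hs : sqrt m2 * sqrt m2 = m2) by (apply sqrt_sqrt; lra).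
  assert (sa : a = sqrt 2 * sqrt m2) by (unfold a; apply sqrt_mult; lra).
  assert (sp : 0 < sqrt m2) by (apply sqrt_lt_R0; lra).
  rewrite sa in H0. apply Rmult_le_reg_r with (sqrt m2); auto. nra.
Qed.

Definition ncons (n : nat) (i : nat -> nat) : nat -> nat := fun j => match j with O => n | S j' => i j' end.

Lemma msum_S {A : Type} (plus : A -> A -> A) z k N f :
  msum plus z (S k) N f = fsum plus z N (fun n => msum plus z k N (fun i => f (ncons n i))).
Proof. reflexivity. Qed.

Lemma fsum_ext_lt {A : Type} (plus : A -> A -> A) z N g h :
  (forall n, (n < N)%nat -> g n = h n) -> fsum plus z N g = fsum plus z N h.
Proof.
  induction N as [|N IH]; intros H; simpl; auto. rewrite IH by (intros; apply H; lia). rewrite H by lia. auto.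
Qed.

Lemma fsum_ext {A : Type} (plus : A -> A -> A) z N g h :
  (forall n, g n = h n) -> fsum plus z N g = fsum plus z N h.
Proof. intros H. apply fsum_ext_lt. auto. Qed.

Lemma msum_ext {A : Type} (plus : A -> A -> A) z k N f g :
  (forall i, f i = g i) -> msum plus z k N f = msum plus z k N g.
Proof. intros H. replace g with f; auto. extensionality i; auto. Qed.

Lemma fsum_Cscal w N g : fsum Cplus 0%C N (fun n => Cmult w (g n)) = Cmult w (fsum Cplus 0%C N g).
Proof. induction N as [|N IH]; simpl. ring. rewrite IH. ring. Qed.

Lemma msum_Cscal k : forall N w f, msum Cplus 0%C k N (fun i => Cmult w (f i)) = Cmult w (msum Cplus 0%C k N f).
Proof.
  induction k as [|k IH]; intros N w f; simpl; auto.
  rewrite <- fsum_Cscal. apply fsum_ext. intros n. apply IH.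
Qed.

Lemma fprod_S k g : fsum Cmult 1%C (S k) g = Cmult (g O) (fsum Cmult 1%C k (fun j => g (S j))).
Proof.
  induction k as [|k IH]. simpl. ring.
  rewrite fsum_S, IH. simpl. ring.
Qed.

Definition sS (k N o : nat) (a : (nat -> nat) -> C) (th : nat -> R) : C :=
  msum Cplus 0%C k N (fun i => Cmult (a i) (fsum Cmult 1%C k (fun j => cis (th (o + j * N + i j)%nat)))).

Lemma steinSum_sS k N a th : steinSum k N a th = sS k N 0 a th.
Proof. reflexivity. Qed.

Lemma sS_S k N o a th : sS (S k) N o a th =
  fsum Cplus 0%C N (fun n => Cmult (cis (th (o + n)%nat)) (sS k N (o + N) (fun i => a (ncons n i)) th)).
Proof.
  unfold sS. rewrite msum_S. apply fsum_ext. intros n. rewrite <- msum_Cscal.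
  apply msum_ext. intros i. rewrite fprod_S.
  replace (o + 0 * N + ncons n i 0)%nat with (o + n)%nat by (simpl; lia).
  replace (fun j => cis (th (o + S j * N + ncons n i (S j))%nat)) with
    (fun j => cis (th (o + N + j * N + i j)%nat)).
  ring. extensionality j. f_equal. f_equal. simpl. lia.
Qed.

Lemma sS_0 N o a th : sS 0 N o a th = a (fun _ => O).
Proof. unfold sS. simpl. ring. Qed.

Definition depC (o M : nat) (g : (nat -> R) -> C) :=
  forall th th', (forall l, (o <= l < o + M)%nat -> th l = th' l) -> g th = g th'.

Lemma sS_dep k : forall N o a, depC o (k * N) (sS k N o a).
Proof.
  induction k as [|k IH]; intros N o a th th' H.
  - rewrite !sS_0. auto.
  - rewrite !sS_S. apply fsum_ext_lt. intros n Hn. f_equal.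
    + rewrite (H (o+n)%nat); auto. simpl; lia.
    + apply IH. intros l Hl. apply H. simpl; lia.
Qed.

Lemma cgood_fsum N (g : nat -> (nat -> R) -> C) : (forall n, CGood (g n)) ->
  CGood (fun th => fsum Cplus 0%C N (fun n => g n th)).
Proof.
  intros H. induction N as [|N IH]; simpl.
  - apply cgood_const.
  - apply cgood_plus; auto.
Qed.

Lemma cgood_sS k : forall N o a, CGood (sS k N o a).
Proof.
  induction k as [|k IH]; intros N o a.
  - replace (sS 0 N o a) with (fun _ : nat -> R => a (fun _ => O)). apply cgood_const.
    extensionality th. rewrite sS_0; auto.
  - replace (sS (S k) N o a) with (fun th => fsum Cplus 0%C N
        (fun n => Cmult (cis (th (o + n)%nat)) (sS k N (o + N) (fun i => a (ncons n i)) th))).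
    apply cgood_fsum. intros n. apply cgood_mult. apply cgood_cis. apply IH.
    extensionality th. rewrite sS_S; auto.
Qed.

Lemma fsum_plusR N f g : fsum Rplus 0 N (fun n => f n + g n) = fsum Rplus 0 N f + fsum Rplus 0 N g.
Proof. induction N as [|N IH]; simpl. ring. rewrite IH. ring. Qed.
Lemma fsum_scalR N c f : fsum Rplus 0 N (fun n => c * f n) = c * fsum Rplus 0 N f.
Proof. induction N as [|N IH]; simpl. ring. rewrite IH. ring. Qed.
Lemma fsum_nonneg N f : (forall n, 0 <= f n) -> 0 <= fsum Rplus 0 N f.
Proof. intros H. induction N as [|N IH]; simpl. lra. specialize (H N). lra. Qed.
Lemma fsum_le N f g : (forall n, f n <= g n) -> fsum Rplus 0 N f <= fsum Rplus 0 N g.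
Proof. intros H. induction N as [|N IH]; simpl. lra. specialize (H N). lra. Qed.

Lemma good_fsumR N (h : nat -> (nat -> R) -> R) : (forall n, Good (h n)) ->
  Good (fun th => fsum Rplus 0 N (fun n => h n th)).
Proof.
  intros H. induction N as [|N IH]; simpl.
  - apply good_const.
  - apply good_plus; auto.
Qed.

Lemma EE_fsum M o N (h : nat -> (nat -> R) -> R) th : (forall n, Good (h n)) ->
  EE M o (fun x => fsum Rplus 0 N (fun n => h n x)) th = fsum Rplus 0 N (fun n => EE M o (h n) th).
Proof.
  intros H. induction N as [|N IH]; simpl.
  - apply EE_const.
  - rewrite EE_plus; auto. rewrite IH; auto. apply good_fsumR; auto.
Qed.

Lemma fsum_quad N a b t : fsum Rplus 0 N (fun n => (a n * t + b n)^2) =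
  fsum Rplus 0 N (fun n => a n ^ 2) * t^2 + 2 * fsum Rplus 0 N (fun n => a n * b n) * t + fsum Rplus 0 N (fun n => b n ^ 2).
Proof. induction N as [|N IH]. simpl; ring. rewrite !fsum_S, IH. ring. Qed.

Lemma fsum_CS2 N a b : (fsum Rplus 0 N (fun n => a n * b n))^2 <=
  fsum Rplus 0 N (fun n => a n ^ 2) * fsum Rplus 0 N (fun n => b n ^ 2).
Proof.
  set (A := fsum Rplus 0 N (fun n => a n ^ 2)).
  set (B := fsum Rplus 0 N (fun n => b n ^ 2)).
  set (C0 := fsum Rplus 0 N (fun n => a n * b n)).
  assert (HQ : forall t, 0 <= A * t^2 + 2 * C0 * t + B).
  { intros t. unfold A, B, C0. rewrite <- fsum_quad.
    apply fsum_nonneg; intros; apply pow2_ge_0. }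
  assert (HA : 0 <= A) by (apply fsum_nonneg; intros; apply pow2_ge_0).
  destruct HA as [HA|HA].
  - specialize (HQ (- C0 / A)).
    replace (A * (- C0 / A)^2 + 2 * C0 * (- C0 / A) + B) with (B - C0^2 / A) in HQ by (field; lra).
    assert (C0^2 / A <= B) by lra.
    apply Rmult_le_compat_r with (r := A) in H; [|lra].
    replace (C0^2 / A * A) with (C0^2) in H by (field; lra). lra.
  - rewrite <- HA in *. destruct (Req_dec C0 0) as [Z|Z].
    + rewrite Z. simpl. lra.
    + specialize (HQ (- (B + 1) / (2 * C0))).
      replace (0 * (- (B + 1) / (2 * C0))^2 + 2 * C0 * (- (B + 1) / (2 * C0)) + B) with (-1) in HQ
        by (field; auto). lra.
Qed.

Lemma fsum_CS N a b : fsum Rplus 0 N (fun n => a n * b n) <=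
  sqrt (fsum Rplus 0 N (fun n => a n ^ 2)) * sqrt (fsum Rplus 0 N (fun n => b n ^ 2)).
Proof.
  rewrite <- sqrt_mult by (apply fsum_nonneg; intros; apply pow2_ge_0).
  apply Rle_trans with (Rabs (fsum Rplus 0 N (fun n => a n * b n))). apply Rle_abs.
  rewrite <- sqrt_Rsqr_abs. apply sqrt_le_1_alt. unfold Rsqr.
  replace (fsum Rplus 0 N (fun n => a n * b n) * fsum Rplus 0 N (fun n => a n * b n)) with
    ((fsum Rplus 0 N (fun n => a n * b n))^2) by ring. apply fsum_CS2.
Qed.

Lemma msum_nonneg k : forall N f, (forall i, 0 <= f i) -> 0 <= msum Rplus 0 k N f.
Proof.
  induction k as [|k IH]; intros N f H; simpl; auto. apply fsum_nonneg. intros n. apply IH. auto.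
Qed.

Lemma EE_sqrt_sum M o N (h : nat -> (nat -> R) -> R) th0 :
  (forall n, Good (h n)) -> (forall n x, 0 <= h n x) ->
  sqrt (fsum Rplus 0 N (fun n => (EE M o (h n) th0)^2)) <=
  EE M o (fun x => sqrt (fsum Rplus 0 N (fun n => h n x ^ 2))) th0.
Proof.
  intros G P.
  assert (GS : Good (fun x => sqrt (fsum Rplus 0 N (fun n => h n x ^ 2)))).
  { apply good_sqrt. apply good_fsumR. intros; apply good_pow; auto.
    intros; apply fsum_nonneg; intros; apply pow2_ge_0. }
  set (S := sqrt (fsum Rplus 0 N (fun n => (EE M o (h n) th0)^2))).
  assert (S0 : 0 <= S) by apply sqrt_pos.
  assert (HS : S * S = fsum Rplus 0 N (fun n => (EE M o (h n) th0)^2))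
    by (apply sqrt_sqrt; apply fsum_nonneg; intros; apply pow2_ge_0).
  destruct S0 as [Sp|Sz].
  2:{ rewrite <- Sz. apply EE_nonneg; auto. intros; apply sqrt_pos. }
  assert (Hpt : forall x, fsum Rplus 0 N (fun n => EE M o (h n) th0 * h n x) <=
                 S * sqrt (fsum Rplus 0 N (fun n => h n x ^ 2))).
  { intros x. apply fsum_CS. }
  assert (HE : EE M o (fun x => fsum Rplus 0 N (fun n => EE M o (h n) th0 * h n x)) th0 <=
               EE M o (fun x => S * sqrt (fsum Rplus 0 N (fun n => h n x ^ 2))) th0).
  { apply EE_mono; auto. apply good_fsumR. intros; apply good_scal; auto. apply good_scal; auto. }
  rewrite EE_fsum in HE by (intros; apply good_scal; auto).
  rewrite EE_scal in HE by auto.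
  rewrite (fsum_ext _ _ _ _ (fun n => (EE M o (h n) th0)^2)) in HE.
  2:{ intros n. rewrite EE_scal by auto. ring. }
  rewrite <- HS in HE. apply Rmult_le_reg_l with S; auto.
Qed.

Lemma Lin_of_sum N o (c : nat -> C) th :
  fsum Cplus 0%C N (fun n => Cmult (cis (th (o + n)%nat)) (c n)) = Lin c o N th.
Proof. unfold Lin. apply fsum_ext. intros; ring. Qed.

Lemma khin_L1 k : forall N o a th0,
  (/ sqrt 2)^k * sqrt (msum Rplus 0 k N (fun i => Cmod (a i) ^ 2)) <=
  EE (k * N) o (fun th => Cmod (sS k N o a th)) th0.
Proof.
  induction k as [|k IH]; intros N o a th0.
  - change ((/ sqrt 2)^0) with 1. change (msum Rplus 0 0 N (fun i => Cmod (a i) ^ 2)) with (Cmod (a (fun _ => O)) ^ 2).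
    change (EE (0 * N) o (fun th => Cmod (sS 0 N o a th)) th0) with (Cmod (sS 0 N o a th0)).
    rewrite sS_0, sqrt_pow2 by apply Cmod_ge_0. lra.
  - change (S k * N)%nat with (N + k * N)%nat. rewrite EE_split.
    set (B := fun n th => sS k N (o + N) (fun i => a (ncons n i)) th).
    assert (GB : forall n, Good (fun th => Cmod (B n th))) by (intros; apply good_Cmod; apply cgood_sS).
    set (G := fun th => sqrt (fsum Rplus 0 N (fun n => Cmod (B n th) ^ 2))).
    assert (GG : Good G).
    { apply good_sqrt. apply good_fsumR. intros; apply good_pow; auto.
      intros; apply fsum_nonneg; intros; apply pow2_ge_0. }
    assert (GF : Good (fun th => Cmod (sS (S k) N o a th))) by (apply good_Cmod; apply cgood_sS).
    assert (Hin : forall th, / sqrt 2 * G th <= EE N o (fun th => Cmod (sS (S k) N o a th)) th).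
    { intros th.
      rewrite (EE_ext_out N o _ (fun th' => Cmod (Lin (fun n => B n th) o N th'))).
      - assert (H := Lin_L1 N o (fun n => B n th) th).
        assert (s2 : 0 < sqrt 2) by (apply sqrt_lt_R0; lra).
        unfold G. apply Rmult_le_reg_l with (sqrt 2); auto.
        rewrite <- Rmult_assoc, Rinv_r by lra. lra.
      - intros th' Hth'. f_equal. rewrite sS_S. rewrite <- Lin_of_sum. apply fsum_ext_lt.
        intros n Hn. f_equal. unfold B. apply sS_dep. intros l Hl. apply Hth'. lia. }
    apply Rle_trans with (EE (k * N) (o + N)%nat (fun th => / sqrt 2 * G th) th0).
    2:{ apply EE_mono; auto. apply good_scal; auto. apply EE_good; auto. }
    rewrite EE_scal by auto.
    assert (HM := EE_sqrt_sum (k * N) (o + N)%nat N (fun n th => Cmod (B n th)) th0 GB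
                   (fun n x => Cmod_ge_0 _)).
    change (EE (k * N) (o + N)%nat (fun x => sqrt (fsum Rplus 0 N (fun n => Cmod (B n x) ^ 2))) th0)
      with (EE (k * N) (o + N)%nat G th0) in HM.
    rewrite <- tech_pow_Rmult. rewrite Rmult_assoc. apply Rmult_le_compat_l.
    { left; apply Rinv_0_lt_compat, sqrt_lt_R0; lra. }
    eapply Rle_trans; [|exact HM].
    rewrite msum_S.
    assert (c0 : 0 <= (/ sqrt 2)^k) by (apply pow_le; left; apply Rinv_0_lt_compat, sqrt_lt_R0; lra).
    rewrite <- (sqrt_pow2 ((/ sqrt 2)^k)) by auto. rewrite <- sqrt_mult.
    2: apply pow2_ge_0.
    2: apply fsum_nonneg; intros; apply msum_nonneg; intros; apply pow2_ge_0.
    apply sqrt_le_1_alt. rewrite <- fsum_scalR. apply fsum_le. intros n.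
    specialize (IH N (o + N)%nat (fun i => a (ncons n i)) th0).
    assert (0 <= (/ sqrt 2)^k * sqrt (msum Rplus 0 k N (fun i => Cmod (a (ncons n i)) ^ 2))).
    { apply Rmult_le_pos; auto. apply sqrt_pos. }
    replace (((/ sqrt 2)^k)^2 * msum Rplus 0 k N (fun i => Cmod (a (ncons n i)) ^ 2)) with
      (((/ sqrt 2)^k * sqrt (msum Rplus 0 k N (fun i => Cmod (a (ncons n i)) ^ 2)))^2).
    + apply pow_incr. split; auto.
    + rewrite Rpow_mult_distr. rewrite pow2_sqrt; auto. apply msum_nonneg; intros; apply pow2_ge_0.
Qed.

Lemma Rpower_ge1 c e : 1 <= c -> 0 <= e -> 1 <= Rpower c e.
Proof.
  intros Hc He. unfold Rpower. rewrite <- exp_0 at 1.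
  destruct He as [He|He]. destruct Hc as [Hc|Hc].
  - left. apply exp_increasing. apply Rmult_lt_0_compat; auto. rewrite <- ln_1. apply ln_increasing; lra.
  - subst. rewrite ln_1, Rmult_0_r. lra.
  - subst. rewrite Rmult_0_l. lra.
Qed.

Lemma Rpower_le1 c e : 0 < c <= 1 -> 0 <= e -> Rpower c e <= 1.
Proof.
  intros Hc He. unfold Rpower. rewrite <- exp_0.
  assert (ln c <= 0). { destruct (Req_dec c 1). subst; rewrite ln_1; lra. left. rewrite <- ln_1. apply ln_increasing; lra. }
  destruct (Req_dec (e * ln c) 0) as [E|E]. rewrite E; lra.
  left. apply exp_increasing. nra.
Qed.

Lemma bernoulli q y : 1 <= q -> 0 <= y -> 1 + q * (y - 1) <= rpow y q.
Proof.
  intros Hq Hy. destruct Hy as [Hy|Hy].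
  2:{ subst. rewrite rpow_nonpos by lra. lra. }
  rewrite rpow_pos by auto.
  set (h := fun x => Rpower x q - q * x).
  assert (Hd : forall c, 0 < c -> derivable_pt_lim h c (q * Rpower c (q - 1) - q)).
  { intros c Hc. unfold h. apply derivable_pt_lim_minus. apply derivable_pt_lim_power; auto.
    replace q with (q * 1) at 2 by ring. apply derivable_pt_lim_scal. apply derivable_pt_lim_id. }
  assert (h1 : h 1 = 1 - q) by (unfold h, Rpower; rewrite ln_1, Rmult_0_r, exp_0; ring).
  assert (h y >= h 1).
  { destruct (Rtotal_order y 1) as [Hlt|[Heq|Hgt]].
    - destruct (MVT_cor2 h (fun c => q * Rpower c (q - 1) - q) y 1 Hlt) as [c [Hc Hcr]].
      { intros c Hc. apply Hd. lra. }
      assert (Rpower c (q - 1) <= 1) by (apply Rpower_le1; lra).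
      assert ((q * Rpower c (q - 1) - q) * (1 - y) <= 0).
      { assert (q * Rpower c (q - 1) - q <= 0) by nra. nra. }
      lra.
    - subst; lra.
    - destruct (MVT_cor2 h (fun c => q * Rpower c (q - 1) - q) 1 y Hgt) as [c [Hc Hcr]].
      { intros c Hc. apply Hd. lra. }
      assert (1 <= Rpower c (q - 1)) by (apply Rpower_ge1; lra).
      assert (0 <= (q * Rpower c (q - 1) - q) * (y - 1)) by (apply Rmult_le_pos; nra).
      lra. }
  unfold h in *. lra.
Qed.

Lemma rpow_div x l q : 0 <= x -> 0 < l -> rpow (x / l) q = rpow x q * / Rpower l q.
Proof.
  intros Hx Hl. destruct Hx as [Hx|Hx].
  - rewrite !rpow_pos. 2: auto. 2: apply Rdiv_lt_0_compat; auto.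
    unfold Rdiv. rewrite <- Rpower_mult_distr; auto. 2: apply Rinv_0_lt_compat; auto.
    f_equal. unfold Rpower. rewrite ln_Rinv by auto. rewrite <- exp_Ropp. f_equal. ring.
  - subst. unfold Rdiv. rewrite Rmult_0_l, rpow_nonpos by lra. ring.
Qed.

Lemma young q x l : 1 <= q -> 0 <= x -> 0 < l ->
  x <= l * (1 - / q) + / q * (l * / Rpower l q) * rpow x q.
Proof.
  intros Hq Hx Hl.
  assert (HB := bernoulli q (x / l) Hq ltac:(apply Rmult_le_pos; [auto| left; apply Rinv_0_lt_compat; auto])).
  rewrite rpow_div in HB by auto.
  set (R0 := rpow x q * / Rpower l q) in *.
  replace (/ q * (l * / Rpower l q) * rpow x q) with (l * (R0 / q)) by (unfold R0; field; split; [unfold Rpower; apply Rgt_not_eq, exp_pos | lra]).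
  assert (x / l <= R0 / q + 1 - / q).
  { apply Rmult_le_reg_l with q. lra. replace (q * (R0 / q + 1 - / q)) with (R0 + q - 1) by (field; lra). nra. }
  replace x with (l * (x / l)) by (field; lra).
  replace (l * (1 - / q) + l * (R0 / q)) with (l * (R0 / q + 1 - / q)) by ring.
  apply Rmult_le_compat_l; lra.
Qed.

Lemma Rpower_inv_pow a q : 0 < a -> 0 < q -> Rpower (Rpower a (/ q)) q = a.
Proof.
  intros Ha Hq. rewrite Rpower_mult. replace (/ q * q) with 1 by (field; lra). apply Rpower_1; auto.
Qed.

Lemma EE_L1_Lq M o f th0 q : 1 <= q -> Good f -> (forall x, 0 <= f x) ->
  EE M o f th0 <= rpow (EE M o (fun x => rpow (f x) q) th0) (/ q).
Proof.
  intros Hq Gf Pf.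
  assert (Gq : Good (fun x => rpow (f x) q)) by (apply good_rpow; auto; lra).
  set (Mq := EE M o (fun x => rpow (f x) q) th0).
  assert (Mq0 : 0 <= Mq) by (apply EE_nonneg; auto; intros; apply rpow_ge0).
  assert (HY : forall l, 0 < l -> EE M o f th0 <= l * (1 - / q) + / q * (l * / Rpower l q) * Mq).
  { intros l Hl. rewrite <- (EE_const M o (l * (1 - / q)) th0) at 1. unfold Mq.
    rewrite <- EE_scal by auto. rewrite <- EE_plus; auto using good_const, good_scal.
    apply EE_mono; auto. apply good_plus; auto using good_const, good_scal.
    intros x. apply young; auto. }
  destruct Mq0 as [Mqp|Mqz].
  - set (l := rpow Mq (/ q)).
    assert (lp : 0 < l) by (unfold l; rewrite rpow_pos by auto; unfold Rpower; apply exp_pos).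
    assert (Hl : Rpower l q = Mq) by (unfold l; rewrite rpow_pos by auto; apply Rpower_inv_pow; lra).
    specialize (HY l lp). rewrite Hl in HY.
    replace (l * (1 - / q) + / q * (l * / Mq) * Mq) with l in HY by (field; lra). exact HY.
  - rewrite <- Mqz. rewrite rpow_nonpos by lra.
    destruct (Rle_lt_dec (EE M o f th0) 0) as [H|H]; auto.
    specialize (HY (EE M o f th0 / 2) ltac:(lra)). rewrite <- Mqz in HY.
    assert (0 <= / q <= 1) by (split; [left; apply Rinv_0_lt_compat; lra | rewrite <- Rinv_1; apply Rinv_le_contravar; lra]).
    nra.
Qed.

Lemma khinchin_pos k q : 1 <= q -> khinchin_ok k q ((/ sqrt 2) ^ k).
Proof.
  intros Hq N a. rewrite steinE_EE.
  eapply Rle_trans. apply (khin_L1 k N 0 a (fun _ => 0)).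
  replace (fun th => Cmod (steinSum k N a th)) with (fun th => Cmod (sS k N 0 a th)) by reflexivity.
  apply EE_L1_Lq; auto. apply good_Cmod. exact (cgood_sS k N 0 a). intros; apply Cmod_ge_0.
Qed.

Lemma rpow_0 q : rpow 0 q = 0.
Proof. apply rpow_nonpos; lra. Qed.

Lemma rpow_1 q : rpow 1 q = 1.
Proof. rewrite rpow_pos by lra. unfold Rpower. rewrite ln_1, Rmult_0_r, exp_0. auto. Qed.

Lemma rpow_mono a b q : 0 <= a <= b -> 0 < q -> rpow a q <= rpow b q.
Proof.
  intros [Ha Hab] Hq. destruct Ha as [Ha|Ha].
  - rewrite !rpow_pos by lra. apply Rle_Rpower_l; lra.
  - subst. rewrite rpow_0. apply rpow_ge0.
Qed.

Lemma rpow_lt a b q : 0 <= a < b -> 0 < q -> rpow a q < rpow b q.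
Proof.
  intros [Ha Hab] Hq. destruct Ha as [Ha|Ha].
  - rewrite !rpow_pos by lra. apply Rlt_Rpower_l; lra.
  - subst. rewrite rpow_0. rewrite rpow_pos by lra. unfold Rpower; apply exp_pos.
Qed.

Lemma rpow_rpow a q r : 0 <= a -> rpow (rpow a q) r = rpow a (q * r).
Proof.
  intros [Ha|Ha].
  - rewrite (rpow_pos a) by auto. rewrite rpow_pos by (unfold Rpower; apply exp_pos).
    rewrite rpow_pos by auto. apply Rpower_mult.
  - subst. rewrite !rpow_0. auto.
Qed.

Lemma rpow_one a : 0 <= a -> rpow a 1 = a.
Proof. intros [Ha|Ha]. rewrite rpow_pos by auto. apply Rpower_1; auto. subst; apply rpow_0. Qed.

Lemma rpow_inv_l a q : 0 <= a -> 0 < q -> rpow (rpow a (/ q)) q = a.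
Proof. intros Ha Hq. rewrite rpow_rpow by auto. replace (/ q * q) with 1 by (field; lra). apply rpow_one; auto. Qed.

Lemma rpow_inv_r a q : 0 <= a -> 0 < q -> rpow (rpow a q) (/ q) = a.
Proof. intros Ha Hq. rewrite rpow_rpow by auto. replace (q * / q) with 1 by (field; lra). apply rpow_one; auto. Qed.

Lemma rpow_mult a b q : 0 <= a -> 0 <= b -> rpow (a * b) q = rpow a q * rpow b q.
Proof.
  intros [Ha|Ha] [Hb|Hb].
  - rewrite !rpow_pos; auto. rewrite Rpower_mult_distr; auto. apply Rmult_lt_0_compat; auto.
  - subst. rewrite Rmult_0_r, !rpow_0. ring.
  - subst. rewrite Rmult_0_l, !rpow_0. ring.
  - subst. rewrite Rmult_0_l, !rpow_0. ring.
Qed.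

Lemma rpow_plus a q r : 0 < a -> rpow a (q + r) = rpow a q * rpow a r.
Proof. intros Ha. rewrite !rpow_pos by auto. apply Rpower_plus. Qed.

Lemma rpow_sqrt x q : 0 <= x -> rpow (sqrt x) q = rpow x (q / 2).
Proof.
  intros [Hx|Hx].
  - rewrite <- Rpower_sqrt by auto. rewrite <- (rpow_pos x (/2)) by auto.
    rewrite rpow_rpow by lra. f_equal. field.
  - subst. rewrite sqrt_0, !rpow_0. auto.
Qed.

Lemma rpow_inv_div a q : 0 < a -> rpow a (- q) = / rpow a q.
Proof. intros Ha. rewrite !rpow_pos by auto. apply Rpower_Ropp. Qed.

Lemma rpow_gt0 a q : 0 < a -> 0 < rpow a q.
Proof. intros Ha. rewrite rpow_pos by auto. unfold Rpower; apply exp_pos. Qed.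

Definition fsupp (N : nat) (v : nat -> C) := forall l, (N <= l)%nat -> v l = 0%C.

Lemma is_series_fin (u : nat -> R) N : (forall l, (N <= l)%nat -> u l = 0) -> is_series u (fsum Rplus 0 N u).
Proof.
  intros H. unfold is_series.
  apply (filterlim_ext_loc (fun _ => fsum Rplus 0 N u)).
  2: apply filterlim_const.
  exists N. intros n Hn.
  assert (E : forall n, sum_n u n = fsum Rplus 0 (S n) u).
  { induction n0 as [|n0 IH]. rewrite sum_O. simpl. unfold plus; simpl. ring.
    rewrite sum_Sn, IH. reflexivity. }
  rewrite E. clear E. induction Hn.
  - rewrite fsum_S, (H N) by lia. ring.
  - rewrite fsum_S. rewrite H by lia. rewrite IHHn. ring.
Qed.

Lemma Series_fin (u : nat -> R) N : (forall l, (N <= l)%nat -> u l = 0) -> Series u = fsum Rplus 0 N u.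
Proof. intros H. apply is_series_unique. apply is_series_fin; auto. Qed.

Lemma inX_fin P v N : fsupp N v -> inX P v.
Proof.
  intros H. destruct P as [r| |]; simpl.
  - exists (fsum Rplus 0 N (fun n => rpow (Cmod (v n)) r)). apply is_series_fin.
    intros l Hl. rewrite H by auto. rewrite Cmod_0. apply rpow_0.
  - apply (is_lim_seq_ext_loc (fun _ => 0)). exists N. intros n Hn. rewrite H by auto. rewrite Cmod_0; auto.
    apply is_lim_seq_const.
  - apply (is_lim_seq_ext_loc (fun _ => 0)). exists N. intros n Hn. rewrite H by auto. rewrite Cmod_0; auto.
    apply is_lim_seq_const.
Qed.

Lemma fsupp_unitv i : fsupp (S i) (unitv i).
Proof. intros l Hl. unfold unitv. destruct (Nat.eqb_spec l i). lia. auto. Qed.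

Definition fvec (N : nat) (d : nat -> C) : nat -> C := fun l => fsum Cplus 0%C N (fun n => Cmult (d n) (unitv n l)).

Lemma fvec_val N d l : fvec N d l = if Nat.ltb l N then d l else 0%C.
Proof.
  unfold fvec. induction N as [|N IH]; simpl.
  - auto.
  - rewrite IH. unfold unitv. destruct (Nat.eqb_spec l N).
    + subst. rewrite (proj2 (Nat.ltb_ge N N)) by lia. rewrite (proj2 (Nat.ltb_lt N (S N))) by lia. ring.
    + destruct (Nat.ltb_spec l N); destruct (Nat.ltb_spec l (S N)); try lia; ring.
Qed.

Lemma fsupp_fvec N d : fsupp N (fvec N d).
Proof. intros l Hl. rewrite fvec_val. destruct (Nat.ltb_spec l N); auto; lia. Qed.

Lemma inX_fvec P N d : inX P (fvec N d).
Proof. apply (inX_fin P _ N). apply fsupp_fvec. Qed.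

Lemma inX_unitv P i : inX P (unitv i).
Proof. apply (inX_fin P _ (S i)). apply fsupp_unitv. Qed.

Lemma normX_inf_le v B : 0 <= B -> (forall n, Cmod (v n) <= B) -> normX p_infty v <= B.
Proof.
  intros HB H. simpl. destruct (Lub_Rbar_correct (fun s => exists n, s = Cmod (v n))) as [Hub Hlub].
  assert (Hle : Rbar_le (Lub_Rbar (fun s => exists n, s = Cmod (v n))) B).
  { apply Hlub. intros s [n ->]. simpl. apply H. }
  destruct (Lub_Rbar (fun s => exists n, s = Cmod (v n))) as [l| |]; simpl in *; auto.
Qed.

Lemma normX_fin r v N : fsupp N v -> normX (Finite r) v = rpow (fsum Rplus 0 N (fun n => rpow (Cmod (v n)) r)) (/ r).
Proof.
  intros H. simpl. f_equal. apply Series_fin. intros l Hl. rewrite H by auto. rewrite Cmod_0. apply rpow_0.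
Qed.

Lemma upd_same (x : nat -> nat -> C) k : upd x k (x k) = x.
Proof. extensionality l. unfold upd. destruct (Nat.eqb_spec l k); subst; auto. Qed.

Lemma inDom_upd m p x k v : inDom m p x -> inX (slot_exp p k) v -> inDom m p (upd x k v).
Proof. intros H Hv l Hl. unfold upd. destruct (Nat.eqb_spec l k); subst; auto. Qed.

Lemma T_zero m p T x s : multilinear m p T -> inDom m p x -> (s < m)%nat -> T (upd x s (fun _ => 0%C)) = 0%C.
Proof.
  intros ML Hx Hs.
  assert (Z : inX (slot_exp p s) (fun _ => 0%C)) by (apply (inX_fin _ _ 0); intros l _; auto).
  assert (E := ML x s Hx Hs (fun _ => 0%C) (fun _ => 0%C) 0%C 0%C Z Z).
  transitivity (T (upd x s (fun n => Cplus (Cmult (RtoC 0) ((fun _ => RtoC 0) n)) (Cmult (RtoC 0) ((fun _ => RtoC 0) n))))).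
  - f_equal. f_equal. extensionality n. ring.
  - rewrite E. ring.
Qed.

Lemma T_fsum m p T x s N d : multilinear m p T -> inDom m p x -> (s < m)%nat ->
  T (upd x s (fvec N d)) = fsum Cplus 0%C N (fun n => Cmult (d n) (T (upd x s (unitv n)))).
Proof.
  intros ML Hx Hs. induction N as [|N IH].
  - simpl. apply (T_zero m p); auto.
  - rewrite fsum_S. rewrite <- IH.
    replace (fvec (S N) d) with (fun l => (1 * fvec N d l + d N * unitv N l)%C)
      by (extensionality l; unfold fvec; rewrite fsum_S; ring).
    rewrite (ML x s Hx Hs (fvec N d) (unitv N) 1%C (d N)); try apply inX_fvec; try apply inX_unitv.
    ring.
Qed.

Definition fillv (s : nat) (x : nat -> nat -> C) (w : nat -> nat -> C) : nat -> nat -> C :=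
  fun kk => if Nat.ltb kk s then x kk else w (kk - s)%nat.

Lemma expand m p T N (ML : multilinear m p T) (OF : only_first m T) r : forall s x c,
  (s + r = m)%nat -> (forall kk, (kk < s)%nat -> inX (slot_exp p kk) (x kk)) ->
  T (fillv s x (fun j => fvec N (c j))) =
  msum Cplus 0%C r N (fun i => Cmult (fsum Cmult 1%C r (fun j => c j (i j))) (T (fillv s x (fun j => unitv (i j))))).
Proof.
  induction r as [|r IH]; intros s x c Hsr Hx.
  - simpl. rewrite Cmult_1_l. apply OF. intros kk Hk. unfold fillv.
    destruct (Nat.ltb_spec kk s); auto. lia.
  - set (X := fillv s x (fun j => fvec N (c j))).
    assert (HX : inDom m p X).
    { intros kk Hk. unfold X, fillv. destruct (Nat.ltb_spec kk s). auto. apply inX_fvec. }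
    assert (EX : X = upd X s (fvec N (c O))).
    { rewrite <- (upd_same X s) at 1. f_equal. unfold X, fillv.
      rewrite (proj2 (Nat.ltb_ge s s)) by lia. rewrite Nat.sub_diag. auto. }
    rewrite EX. rewrite (T_fsum m p T X s N (c O)); auto; try lia.
    rewrite msum_S. apply fsum_ext. intros n.
    assert (E1 : upd X s (unitv n) = fillv (S s) (upd x s (unitv n)) (fun j => fvec N (c (S j)))).
    { extensionality kk. unfold upd, X, fillv.
      destruct (Nat.eqb_spec kk s).
      - subst. rewrite (proj2 (Nat.ltb_lt s (S s))) by lia. rewrite ?Nat.eqb_refl. auto.
      - destruct (Nat.ltb_spec kk s); destruct (Nat.ltb_spec kk (S s)); try lia.
        + auto.
        + f_equal. f_equal. lia. }
    rewrite E1. rewrite (IH (S s) (upd x s (unitv n)) (fun j => c (S j))).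
    + rewrite <- msum_Cscal. apply msum_ext. intros i. rewrite fprod_S. simpl (ncons n i O).
      assert (E2 : fillv s x (fun j => unitv (ncons n i j)) = fillv (S s) (upd x s (unitv n)) (fun j => unitv (i j))).
      { extensionality kk. unfold upd, fillv.
        destruct (Nat.eqb_spec kk s).
        - subst. rewrite (proj2 (Nat.ltb_lt s (S s))) by lia. rewrite (proj2 (Nat.ltb_ge s s)) by lia.
          rewrite Nat.sub_diag. auto.
        - destruct (Nat.ltb_spec kk s); destruct (Nat.ltb_spec kk (S s)); try lia; auto.
          replace (kk - s)%nat with (S (kk - S s)) by lia. reflexivity. }
      rewrite E2. change (fun j => c (S j) (ncons n i (S j))) with (fun j => c (S j) (i j)). ring.
    + lia.
    + intros kk Hk. unfold upd. destruct (Nat.eqb_spec kk s). subst. apply inX_unitv. apply Hx. lia.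
Qed.

Lemma steinSum_T m p T N (ML : multilinear m p T) (OF : only_first m T) (Hm : (1 <= m)%nat) th i1 :
  steinSum (m - 1) N (fun i => T (fun kk => match kk with O => unitv i1 | S k' => unitv (i k') end)) th
  = T (fillv 1 (fun _ => unitv i1) (fun j => fvec N (fun n => cis (th (j * N + n)%nat)))).
Proof.
  rewrite (expand m p T N ML OF (m - 1) 1 (fun _ => unitv i1) (fun j n => cis (th (j * N + n)%nat))).
  - unfold steinSum. apply msum_ext. intros i.
    replace (fillv 1 (fun _ => unitv i1) (fun j => unitv (i j))) with
      (fun kk => match kk with O => unitv i1 | S k' => unitv (i k') end).
    ring. extensionality kk. unfold fillv. destruct kk; simpl; auto. rewrite Nat.sub_0_r. auto.
  - lia.
  - intros kk Hk. apply inX_unitv.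
Qed.

Lemma fsum_RtoC N f : fsum Cplus 0%C N (fun n => RtoC (f n)) = RtoC (fsum Rplus 0 N f).
Proof. induction N as [|N IH]; simpl; auto. rewrite IH. rewrite RtoC_plus. auto. Qed.

Lemma sq_rpow x q : 0 <= x -> x ^ 2 * rpow x (q - 2) = rpow x q.
Proof.
  intros [Hx|Hx].
  - replace (x ^ 2) with (rpow x 2). rewrite <- rpow_plus by auto. f_equal. ring.
    rewrite rpow_pos by auto. replace 2 with (INR 2) by (simpl; ring). apply Rpower_pow; auto.
  - subst. rewrite !rpow_0. ring.
Qed.

Lemma x_rpow x q : 0 < x -> x * rpow x (q - 2) = rpow x (q - 1).
Proof.
  intros Hx. rewrite <- (rpow_one x) at 1 by lra. rewrite <- rpow_plus by auto. f_equal. ring.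
Qed.

Lemma conj_exp_ge1 p : Rbar_le (Finite 2) p -> 1 <= conj_exp p.
Proof.
  intros H. destruct p as [r| |]; simpl in *; try lra; try contradiction.
  apply Rmult_le_reg_r with (r - 1). lra. unfold Rdiv. rewrite Rmult_assoc, Rinv_l by lra. lra.
Qed.

Lemma duality_norm p N (b : nat -> C) beta Z :
  Rbar_le (Finite 2) p -> 0 < beta ->
  beta = fsum Rplus 0 N (fun i => rpow (Cmod (b i)) (conj_exp p)) ->
  Z = rpow beta (1 - / conj_exp p) ->
  normX p (fvec N (fun i => Cmult (Cconj (b i)) (RtoC (rpow (Cmod (b i)) (conj_exp p - 2) / Z)))) <= 1.
Proof.
  intros Hp Hb Hbeta HZ.
  assert (Zp : 0 < Z) by (rewrite HZ; apply rpow_gt0; auto).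
  assert (Hd : forall i, Cmod (Cmult (Cconj (b i)) (RtoC (rpow (Cmod (b i)) (conj_exp p - 2) / Z)))
                 = Cmod (b i) * rpow (Cmod (b i)) (conj_exp p - 2) / Z).
  { intros i. rewrite Cmod_mult, Cmod_conj, Cmod_R. rewrite Rabs_pos_eq. unfold Rdiv; ring.
    apply Rmult_le_pos. apply rpow_ge0. left; apply Rinv_0_lt_compat; auto. }
  destruct p as [r| |]; simpl in Hp; try contradiction.
  - set (q := conj_exp (Finite r)) in *.
    assert (Hq : q = r / (r - 1)) by reflexivity.
    rewrite (normX_fin r _ N) by apply fsupp_fvec.
    rewrite (fsum_ext_lt _ _ _ _ (fun n => / beta * rpow (Cmod (b n)) q)).
    + rewrite fsum_scalR. rewrite <- Hbeta.
      rewrite Rinv_l by lra. rewrite rpow_1. lra.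
    + intros n Hn. rewrite (Rmult_comm (/ beta)). fold (Rdiv (rpow (Cmod (b n)) q) beta). rewrite fvec_val. rewrite (proj2 (Nat.ltb_lt n N)) by auto. rewrite Hd.
      destruct (Cmod_ge_0 (b n)) as [Hx|Hx].
      * unfold Rdiv. rewrite x_rpow by auto. rewrite rpow_mult. 2: apply rpow_ge0. 2: left; apply Rinv_0_lt_compat; auto.
        rewrite rpow_rpow by lra. replace ((q - 1) * r) with q by (rewrite Hq; field; lra).
        f_equal. rewrite HZ.
        assert (E : rpow (/ rpow beta (1 - / q)) r * rpow (rpow beta (1 - / q)) r = 1).
        { rewrite <- rpow_mult. rewrite Rinv_l. apply rpow_1. apply Rgt_not_eq, rpow_gt0; auto.
          left; apply Rinv_0_lt_compat, rpow_gt0; auto. apply rpow_ge0. }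
        rewrite rpow_rpow in E by lra. replace ((1 - / q) * r) with 1 in E by (rewrite Hq; field; lra).
        rewrite rpow_one in E by lra. apply Rmult_eq_reg_r with beta; [|lra]. rewrite E. field. lra.
      * rewrite <- Hx. unfold Rdiv. rewrite Rmult_0_l, Rmult_0_l, !rpow_0. ring.
  - apply normX_inf_le. lra. intros n. rewrite fvec_val. destruct (Nat.ltb_spec n N).
    + rewrite Hd. simpl conj_exp in *. replace (1 - / 1) with 0 in HZ by (field). 
      rewrite HZ. rewrite (rpow_pos beta 0 Hb). rewrite Rpower_O by auto.
      destruct (Cmod_ge_0 (b n)) as [Hx|Hx].
      * rewrite x_rpow by auto. replace (1 - 1) with 0 by ring. rewrite (rpow_pos (Cmod (b n)) 0 Hx). rewrite Rpower_O by auto. lra.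
      * rewrite <- Hx. lra.
    + rewrite Cmod_0. lra.
Qed.

Lemma duality m p T N Y (ML : multilinear m p T) (Hp : Rbar_le (Finite 2) p) (Hm : (1 <= m)%nat)
  (HY : inDom m p Y)
  (HYn : forall kk, (1 <= kk < m)%nat -> normX (slot_exp p kk) (Y kk) <= 1)
  (Hop : forall x, inDom m p x -> (forall kk, (kk < m)%nat -> normX (slot_exp p kk) (x kk) <= 1) ->
         Cmod (T x) <= opnorm m p T) :
  fsum Rplus 0 N (fun i => rpow (Cmod (T (upd Y 0 (unitv i)))) (conj_exp p)) <= rpow (opnorm m p T) (conj_exp p).
Proof.
  assert (Hq := conj_exp_ge1 p Hp).
  set (q := conj_exp p) in *.
  set (b := fun i => T (upd Y 0 (unitv i))).
  change (fsum Rplus 0 N (fun i => rpow (Cmod (b i)) q) <= rpow (opnorm m p T) q).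
  set (beta := fsum Rplus 0 N (fun i => rpow (Cmod (b i)) q)).
  assert (B0 : 0 <= beta) by (apply fsum_nonneg; intros; apply rpow_ge0).
  destruct B0 as [Bp|Bz].
  2:{ rewrite <- Bz. apply rpow_ge0. }
  set (Z := rpow beta (1 - / q)).
  assert (Zp : 0 < Z) by (apply rpow_gt0; auto).
  set (d := fun i => Cmult (Cconj (b i)) (RtoC (rpow (Cmod (b i)) (q - 2) / Z))).
  assert (HT : T (upd Y 0 (fvec N d)) = RtoC (beta / Z)).
  { rewrite (T_fsum m p T Y 0 N d ML HY) by lia.
    rewrite (fsum_ext _ _ _ _ (fun n => RtoC (/ Z * rpow (Cmod (b n)) q))).
    - rewrite fsum_RtoC. f_equal. rewrite fsum_scalR. unfold beta. unfold Rdiv. ring.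
    - intros n. fold (b n). unfold d.
      transitivity (Cmult (RtoC (Cmod (b n) ^ 2)) (RtoC (rpow (Cmod (b n)) (q - 2) / Z))).
      + rewrite Cmod2_conj. ring.
      + rewrite <- RtoC_mult. f_equal. rewrite <- (sq_rpow (Cmod (b n)) q) by apply Cmod_ge_0.
        unfold Rdiv. ring. }
  assert (Hfeas : Cmod (T (upd Y 0 (fvec N d))) <= opnorm m p T).
  { apply Hop. apply inDom_upd; auto. apply inX_fvec.
    intros kk Hk. unfold upd. destruct (Nat.eqb_spec kk 0).
    - subst. simpl slot_exp. apply (duality_norm p N b beta Z); auto.
    - apply HYn. lia. }
  rewrite HT, Cmod_R, Rabs_pos_eq in Hfeas by (apply Rdiv_le_0_compat; lra).
  assert (E : beta / Z = rpow beta (/ q)).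
  { unfold Z, Rdiv. rewrite <- rpow_inv_div by auto. rewrite <- (rpow_one beta) at 1 by lra.
    rewrite <- rpow_plus by auto. f_equal. ring. }
  rewrite E in Hfeas.
  rewrite <- (rpow_inv_l beta q) by lra. apply rpow_mono; [|lra]. split; auto. apply rpow_ge0.
Qed.

Definition feasible m p (x : nat -> nat -> C) :=
  inDom m p x /\ forall kk, (kk < m)%nat -> normX (slot_exp p kk) (x kk) <= 1.

Lemma opnorm_ge m p T K x : (forall y, feasible m p y -> Cmod (T y) <= K) -> feasible m p x ->
  Cmod (T x) <= opnorm m p T.
Proof.
  intros HK Hx. unfold opnorm.
  destruct (Lub_Rbar_correct (fun s => exists x, inDom m p x /\
     (forall k, (k < m)%nat -> normX (slot_exp p k) (x k) <= 1) /\ s = Cmod (T x))) as [Hub Hl].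
  assert (H1 : Rbar_le (Cmod (T x)) (Lub_Rbar (fun s => exists x, inDom m p x /\
     (forall k, (k < m)%nat -> normX (slot_exp p k) (x k) <= 1) /\ s = Cmod (T x)))).
  { apply Hub. exists x. destruct Hx. auto. }
  assert (H2 : Rbar_le (Lub_Rbar (fun s => exists x, inDom m p x /\
     (forall k, (k < m)%nat -> normX (slot_exp p k) (x k) <= 1) /\ s = Cmod (T x))) K).
  { apply Hl. intros s [y [Hy1 [Hy2 ->]]]. simpl. apply HK. split; auto. }
  destruct (Lub_Rbar _) as [l| |]; simpl in *; auto; contradiction.
Qed.

Lemma fsum_term_le N f n : (forall k, 0 <= f k) -> (n < N)%nat -> f n <= fsum Rplus 0 N f.
Proof.
  intros Hf Hn. induction N as [|N IH]. lia. rewrite fsum_S.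
  destruct (Nat.eq_dec n N). subst. assert (0 <= fsum Rplus 0 N f) by (apply fsum_nonneg; auto). lra.
  assert (f n <= fsum Rplus 0 N f) by (apply IH; lia). specialize (Hf N). lra.
Qed.

Lemma c0_bounded v : is_lim_seq (fun n => Cmod (v n)) 0 -> exists B, forall n, Cmod (v n) <= B.
Proof.
  intros H. apply is_lim_seq_spec in H. destruct (H (mkposreal 1 Rlt_0_1)) as [N0 HN]. simpl in HN.
  exists (1 + fsum Rplus 0 N0 (fun n => Cmod (v n))). intros n.
  assert (0 <= fsum Rplus 0 N0 (fun n => Cmod (v n))) by (apply fsum_nonneg; intros; apply Cmod_ge_0).
  destruct (Nat.lt_ge_cases n N0).
  - assert (Cmod (v n) <= fsum Rplus 0 N0 (fun n => Cmod (v n))) by (apply (fsum_term_le N0 (fun n => Cmod (v n))); auto; intros; apply Cmod_ge_0).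
    lra.
  - specialize (HN n H1). rewrite Rminus_0_r in HN. apply Rabs_lt_between in HN. lra.
Qed.

Lemma normX_inf_bound v : inX p_infty v -> forall n, Cmod (v n) <= normX p_infty v.
Proof.
  intros Hv n. simpl in Hv. destruct (c0_bounded v Hv) as [B HB]. simpl.
  destruct (Lub_Rbar_correct (fun s => exists n, s = Cmod (v n))) as [Hub Hl].
  assert (H1 : Rbar_le (Cmod (v n)) (Lub_Rbar (fun s => exists n, s = Cmod (v n)))) by (apply Hub; eauto).
  assert (H2 : Rbar_le (Lub_Rbar (fun s => exists n, s = Cmod (v n))) B).
  { apply Hl. intros s [k ->]. simpl. auto. }
  destruct (Lub_Rbar _) as [l| |]; simpl in *; auto; contradiction.
Qed.

Definition okP (P : Rbar) := P = p_infty \/ exists r, 0 < r /\ P = Finite r.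

Lemma okP_slot p kk : Rbar_le (Finite 2) p -> okP (slot_exp p kk).
Proof.
  intros Hp. destruct kk; simpl. destruct p as [r| |]; simpl in Hp; try contradiction.
  right. exists r. split; auto; lra. left; auto. left; auto.
Qed.

Lemma Cmod_scal c z : 0 <= c -> Cmod (Cmult (RtoC c) z) = c * Cmod z.
Proof. intros Hc. rewrite Cmod_mult, Cmod_R, Rabs_pos_eq; auto. Qed.

Lemma inX_scal P c v : okP P -> 0 <= c -> inX P v -> inX P (fun n => Cmult (RtoC c) (v n)).
Proof.
  intros [->|[r [Hr ->]]] Hc Hv; simpl in *.
  - apply (is_lim_seq_ext (fun n => c * Cmod (v n))). intros n. rewrite Cmod_scal; auto.
    replace (Finite 0) with (Rbar_mult c 0) by (simpl; f_equal; ring). apply is_lim_seq_scal_l; auto.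
  - apply (ex_series_ext (fun n => rpow c r * rpow (Cmod (v n)) r)).
    + intros n. rewrite Cmod_scal by auto. symmetry. apply rpow_mult; auto. apply Cmod_ge_0.
    + apply (ex_series_scal_l (K:=R_AbsRing) (V:=R_NormedModule) (rpow c r) _ Hv).
Qed.

Lemma normX_scal P c v : okP P -> 0 < c -> inX P v ->
  normX P (fun n => Cminus 0%C (Cmult (RtoC c) (v n))) <= c * normX P v.
Proof.
  intros [->|[r [Hr ->]]] Hc Hv.
  - apply normX_inf_le. apply Rmult_le_pos. lra. eapply Rle_trans. apply (Cmod_ge_0 (v O)). apply normX_inf_bound; auto.
    intros n. replace (Cminus 0%C (Cmult (RtoC c) (v n))) with (Copp (Cmult (RtoC c) (v n))) by ring.
    rewrite Cmod_opp, Cmod_scal by lra. apply Rmult_le_compat_l. lra. apply normX_inf_bound; auto.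
  - simpl. right.
    rewrite (Series_ext _ (fun n => rpow c r * rpow (Cmod (v n)) r)).
    2:{ intros n. replace (Cminus 0%C (Cmult (RtoC c) (v n))) with (Copp (Cmult (RtoC c) (v n))) by ring.
        rewrite Cmod_opp, Cmod_scal by lra. apply rpow_mult. lra. apply Cmod_ge_0. }
    rewrite Series_scal_l.
    set (S := Series (fun n => rpow (Cmod (v n)) r)).
    destruct (Rle_lt_dec S 0) as [Hs|Hs].
    + rewrite !rpow_nonpos; auto. ring. assert (0 < rpow c r) by (apply rpow_gt0; auto). nra.
    + rewrite rpow_mult. rewrite rpow_inv_r; auto. lra. apply rpow_ge0. lra.
Qed.

Lemma T_scale m p T c x (ML : multilinear m p T) (OF : only_first m T) (Hp : Rbar_le (Finite 2) p) :
  0 <= c -> inDom m p x -> T (fun kk n => Cmult (RtoC c) (x kk n)) = Cmult (RtoC (c ^ m)) (T x).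
Proof.
  intros Hc Hx.
  set (sc := fun j kk => if Nat.ltb kk j then (fun n => Cmult (RtoC c) (x kk n)) else x kk).
  assert (H : forall j, (j <= m)%nat -> inDom m p (sc j) /\ T (sc j) = Cmult (RtoC (c ^ j)) (T x)).
  { induction j as [|j IH]; intros Hj.
    - replace (sc O) with x. split; auto. simpl. ring.
      extensionality kk. unfold sc. destruct (Nat.ltb_spec kk 0); auto. lia.
    - destruct (IH ltac:(lia)) as [D E]. split.
      + intros kk Hk. unfold sc. destruct (Nat.ltb_spec kk (S j)).
        * apply inX_scal. apply okP_slot; auto. exact Hc. apply Hx; lia.
        * apply Hx; lia.
      + assert (E1 : sc (S j) = upd (sc j) j (fun n => Cplus (Cmult (RtoC c) (x j n)) (Cmult (RtoC 0) (x j n)))).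
        { extensionality kk. unfold sc, upd. destruct (Nat.eqb_spec kk j).
          - subst. rewrite (proj2 (Nat.ltb_lt j (S j))) by lia. extensionality n. ring.
          - destruct (Nat.ltb_spec kk (S j)); destruct (Nat.ltb_spec kk j); auto; lia. }
        rewrite E1. rewrite (ML (sc j) j D ltac:(lia) (x j) (x j) (RtoC c) (RtoC 0)); try (apply Hx; lia).
        assert (E2 : upd (sc j) j (x j) = sc j).
        { extensionality kk. unfold sc, upd. destruct (Nat.eqb_spec kk j). subst.
          rewrite (proj2 (Nat.ltb_ge j j)) by lia. auto. auto. }
        rewrite E2, E. rewrite <- tech_pow_Rmult. rewrite RtoC_mult. ring. }
  destruct (H m ltac:(lia)) as [_ E]. rewrite <- E. apply OF.
  intros kk Hk. unfold sc. rewrite (proj2 (Nat.ltb_lt kk m)) by lia. auto.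
Qed.

Lemma cont_bounded m p T (Hp : Rbar_le (Finite 2) p) (Hm : (1 <= m)%nat) (ML : multilinear m p T)
  (OF : only_first m T) (CF : continuous_form m p T) :
  exists K, forall x, feasible m p x -> Cmod (T x) <= K.
Proof.
  set (x0 := fun (_ : nat) (_ : nat) => 0%C).
  assert (D0 : inDom m p x0) by (intros k _; apply (inX_fin _ _ 0); intros l _; auto).
  destruct (CF x0 D0 1 Rlt_0_1) as [d [Hd Hc]].
  assert (T0 : T x0 = 0%C).
  { assert (E0 : upd x0 0%nat (fun _ => 0%C) = x0).
    { extensionality k. unfold upd, x0. destruct (Nat.eqb_spec k 0); auto. }
    rewrite <- E0. apply (T_zero m p); auto. }
  set (c := d / 2). assert (cp : 0 < c) by (unfold c; lra).
  exists (/ c ^ m). intros x [Dx Nx].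
  set (y := fun kk n => Cmult (RtoC c) (x kk n)).
  assert (Dy : inDom m p y).
  { intros kk Hk. apply inX_scal; auto. apply okP_slot; auto. lra. }
  assert (Ny : forall k, (k < m)%nat -> normX (slot_exp p k) (fun n => Cminus (x0 k n) (y k n)) < d).
  { intros k Hk. unfold x0, y. eapply Rle_lt_trans. apply normX_scal; auto. apply okP_slot; auto.
    specialize (Nx k Hk). unfold c. nra. }
  specialize (Hc y Dy Ny). rewrite T0 in Hc.
  replace (Cminus (T y) 0%C) with (T y) in Hc by ring.
  unfold y in Hc. rewrite (T_scale m p T c x ML OF Hp) in Hc by (auto; lra).
  rewrite Cmod_scal in Hc by (apply pow_le; lra).
  assert (0 < c ^ m) by (apply pow_lt; auto).
  apply Rmult_le_reg_l with (c ^ m); auto. rewrite Rinv_r by lra. lra.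
Qed.

Lemma Cmod_cis t : Cmod (cis t) = 1.
Proof.
  unfold cis, Cmod. simpl. replace (cos t * (cos t * 1) + sin t * (sin t * 1)) with 1. apply sqrt_1.
  assert (H := sin2_cos2 t). unfold Rsqr in H. lra.
Qed.

Lemma sS_one k : forall o th, Cmod (sS k 1 o (fun _ => 1%C) th) = 1.
Proof.
  induction k as [|k IH]; intros o th.
  - rewrite sS_0. apply Cmod_1.
  - rewrite sS_S. simpl. rewrite Cplus_0_l. rewrite Cmod_mult, Cmod_cis, IH. ring.
Qed.

Lemma msum_one k : msum Rplus 0 k 1 (fun _ => 1) = 1.
Proof. induction k as [|k IH]; simpl; auto. rewrite IH. ring. Qed.

Lemma khin_ub k q S : 0 < q -> khinchin_ok k q S -> S <= 1.
Proof.
  intros Hq H. specialize (H 1%nat (fun _ => 1%C)).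
  rewrite (msum_ext _ _ _ _ _ (fun _ => 1)) in H by (intros; rewrite Cmod_1; ring).
  rewrite msum_one, sqrt_1 in H.
  replace (fun th => rpow (Cmod (steinSum k 1 (fun _ => 1%C) th)) q) with (fun _ : nat -> R => 1) in H.
  - rewrite steinE_EE, EE_const, rpow_1 in H. lra.
  - extensionality th. rewrite steinSum_sS, sS_one, rpow_1. auto.
Qed.

Lemma steinE_good n f : Good f -> steinE n f = EE n 0 f (fun _ => 0).
Proof. intros; apply steinE_EE. Qed.

Lemma main_S m p T N (Hp : Rbar_le (Finite 2) p) (Hm : (2 <= m)%nat)
  (OF : only_first m T) (ML : multilinear m p T) (CF : continuous_form m p T) Sc :
  0 < Sc -> khinchin_ok (m - 1) (conj_exp p) Sc -> Sc * mixed_sum m (conj_exp p) T N <= opnorm m p T.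
Proof.
  intros Sp KH.
  assert (Hq := conj_exp_ge1 p Hp). set (q := conj_exp p) in *.
  destruct (cont_bounded m p T Hp ltac:(lia) ML OF CF) as [K HK].
  assert (Hop : forall x, inDom m p x -> (forall kk, (kk < m)%nat -> normX (slot_exp p kk) (x kk) <= 1) ->
         Cmod (T x) <= opnorm m p T).
  { intros x H1 H2. apply (opnorm_ge m p T K); auto. split; auto. }
  set (k := (m - 1)%nat).
  set (a := fun i1 i => T (fun kk => match kk with O => unitv i1 | S k' => unitv (i k') end)).
  set (W := fun th (j : nat) => fvec N (fun n => cis (th (j * N + n)%nat))).
  set (Y := fun th => fillv 1 (fun _ _ => 0%C) (W th)).
  assert (HY : forall th, inDom m p (Y th)).
  { intros th kk Hk. unfold Y, fillv. destruct (Nat.ltb_spec kk 1). apply (inX_fin _ _ 0). intros l _; auto.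
    apply inX_fvec. }
  assert (HYn : forall th kk, (1 <= kk < m)%nat -> normX (slot_exp p kk) (Y th kk) <= 1).
  { intros th kk Hk. destruct kk as [|kk]. lia. simpl slot_exp. unfold Y, fillv.
    destruct (Nat.ltb_spec (S kk) 1). lia. apply normX_inf_le. lra. intros n. unfold W. rewrite fvec_val.
    destruct (Nat.ltb_spec n N). rewrite Cmod_cis; lra. rewrite Cmod_0; lra. }
  assert (HS : forall th i1, steinSum k N (a i1) th = T (upd (Y th) 0%nat (unitv i1))).
  { intros th i1. unfold a, k. rewrite (steinSum_T m p T N ML OF ltac:(lia)). f_equal.
    extensionality kk. unfold upd, Y, fillv. destruct kk; simpl; auto. }
  assert (Hpt : forall th, fsum Rplus 0 N (fun i1 => rpow (Cmod (steinSum k N (a i1) th)) q) <= rpow (opnorm m p T) q).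
  { intros th. rewrite (fsum_ext _ _ _ _ (fun i1 => rpow (Cmod (T (upd (Y th) 0%nat (unitv i1)))) q))
      by (intros; rewrite HS; auto).
    apply (duality m p T N (Y th) ML Hp ltac:(lia) (HY th) (HYn th) Hop). }
  assert (Gi : forall i1, Good (fun th => rpow (Cmod (steinSum k N (a i1) th)) q)).
  { intros i1. apply good_Cmod_rpow. lra. apply (cgood_sS k N 0 (a i1)). }
  assert (Hsum : rpow Sc q * fsum Rplus 0 N (fun i1 => rpow (msum Rplus 0 k N (fun i => Cmod (a i1 i) ^ 2)) (q / 2))
                 <= rpow (opnorm m p T) q).
  { rewrite <- fsum_scalR.
    apply Rle_trans with (fsum Rplus 0 N (fun i1 => steinE (k * N) (fun th => rpow (Cmod (steinSum k N (a i1) th)) q))).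
    - apply fsum_le. intros i1. specialize (KH N (a i1)). fold k in KH.
      set (E1 := steinE (k * N) (fun th => rpow (Cmod (steinSum k N (a i1) th)) q)) in *.
      assert (E0 : 0 <= E1).
      { unfold E1. rewrite steinE_EE. apply EE_nonneg; auto. intros; apply rpow_ge0. }
      assert (M0 : 0 <= msum Rplus 0 k N (fun i => Cmod (a i1 i) ^ 2)) by (apply msum_nonneg; intros; apply pow2_ge_0).
      assert (KH2 : rpow (Sc * sqrt (msum Rplus 0 k N (fun i => Cmod (a i1 i) ^ 2))) q <= rpow (rpow E1 (/ q)) q).
      { apply rpow_mono; [split; [apply Rmult_le_pos; [lra| apply sqrt_pos] | exact KH] | lra]. }
      clear KH. rename KH2 into KH.
      rewrite rpow_inv_l in KH by lra. rewrite rpow_mult in KH by (try lra; apply sqrt_pos).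
      rewrite rpow_sqrt in KH by auto. exact KH.
    - rewrite (fsum_ext _ _ _ _ (fun i1 => EE (k * N) 0 (fun th => rpow (Cmod (steinSum k N (a i1) th)) q) (fun _ => 0))).
      2:{ intros; apply steinE_EE. }
      rewrite <- (EE_fsum (k * N) 0 N (fun i1 th => rpow (Cmod (steinSum k N (a i1) th)) q)) by auto.
      rewrite <- (EE_const (k * N) 0 (rpow (opnorm m p T) q) (fun _ => 0)).
      apply EE_mono; auto. apply good_fsumR; auto. apply good_const. }
  set (Sig := fsum Rplus 0 N (fun i1 => rpow (msum Rplus 0 k N (fun i => Cmod (a i1 i) ^ 2)) (q / 2))) in *.
  assert (Sig0 : 0 <= Sig) by (apply fsum_nonneg; intros; apply rpow_ge0).
  assert (On0 : 0 <= opnorm m p T).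
  { eapply Rle_trans. apply (Cmod_ge_0 (T (Y (fun _ => 0)))). apply Hop. apply HY.
    intros kk Hk. destruct kk as [|kk].
    - unfold Y, fillv. simpl. destruct p as [r| |]; simpl in Hp; try contradiction.
      + rewrite (normX_fin r _ 0) by (intros l _; auto). simpl. rewrite rpow_0. lra.
      + apply normX_inf_le. lra. intros; rewrite Cmod_0; lra.
    - apply HYn. lia. }
  unfold mixed_sum. fold k.
  change (Sc * rpow Sig (/ q) <= opnorm m p T).
  rewrite <- (rpow_inv_r Sc q) at 1 by lra. rewrite <- rpow_mult by (try apply rpow_ge0; auto).
  rewrite <- (rpow_inv_r (opnorm m p T) q) by lra.
  apply rpow_mono. split. apply Rmult_le_pos; auto. apply rpow_ge0. exact Hsum.
  apply Rinv_0_lt_compat; lra.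
Qed.

Theorem mainTheorem5 (p : Rbar) (m : nat) (T : (nat -> nat -> C) -> C) :
  Rbar_le (Finite 2) p -> (2 <= m)%nat ->
  only_first m T -> multilinear m p T -> continuous_form m p T ->
  forall N : nat,
    mixed_sum m (conj_exp p) T N <= / S_const (m - 1) (conj_exp p) * opnorm m p T.
Proof.
  intros Hp Hm OF ML CF N.
  assert (Hq := conj_exp_ge1 p Hp).
  set (q := conj_exp p) in *.
  set (E := khinchin_ok (m - 1) q).
  set (c0 := (/ sqrt 2) ^ (m - 1)).
  assert (c0p : 0 < c0) by (apply pow_lt; apply Rinv_0_lt_compat, sqrt_lt_R0; lra).
  assert (Ec0 : E c0) by (apply khinchin_pos; auto).
  destruct (Lub_Rbar_correct E) as [Hub Hl].
  assert (H1 : Rbar_le c0 (Lub_Rbar E)) by (apply Hub; auto).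
  assert (H2 : Rbar_le (Lub_Rbar E) 1).
  { apply Hl. intros s Hs. simpl. apply (khin_ub (m - 1) q); auto. lra. }
  assert (Mix0 : 0 <= mixed_sum m q T N) by (unfold mixed_sum; apply rpow_ge0).
  assert (HS := main_S m p T N Hp Hm OF ML CF).
  fold q in HS.
  assert (On0 : 0 <= opnorm m p T).
  { specialize (HS c0 c0p Ec0). nra. }
  unfold S_const. fold E.
  destruct (Lub_Rbar E) as [L| |] eqn:EL; simpl in H1, H2; try contradiction.
  simpl real.
  assert (Lp : 0 < L) by lra.
  destruct Mix0 as [Mp|Mz].
  - assert (HB : Rbar_le (Finite L) (opnorm m p T / mixed_sum m q T N)).
    { apply Hl. intros s Hs. simpl. destruct (Rle_lt_dec s 0).
      - apply Rle_trans with 0; auto. apply Rdiv_le_0_compat; auto.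
      - specialize (HS s r Hs). apply Rmult_le_reg_r with (mixed_sum m q T N); auto.
        unfold Rdiv. rewrite Rmult_assoc, Rinv_l by lra. lra. }
    simpl in HB.
    apply Rmult_le_reg_l with L; auto. rewrite <- Rmult_assoc, Rinv_r, Rmult_1_l by lra.
    apply Rmult_le_compat_r with (r := mixed_sum m q T N) in HB; [|lra].
    unfold Rdiv in HB. rewrite Rmult_assoc, Rinv_l, Rmult_1_r in HB by lra. lra.
  - rewrite <- Mz. apply Rmult_le_pos; auto. left; apply Rinv_0_lt_compat; auto.
Qed.
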